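(* For every $\ell>0$ let $\mathscr D_\ell=\{(r,v)\in(0,\infty)\times\mathbb R: v^2-\frac mr+\frac{\ell}{r^2}>0\}$. Define $(R(\cdot,\cdot,\ell),V(\cdot,\cdot,\ell)):\mathbb R\times(0,\infty)\to\mathscr D_\ell$ by $$R(\theta,a,\ell)=p\,H_\kappa\Big(\frac{|\theta|}{p}\Big)-p\kappa,\qquad V(\theta,a,\ell)=\operatorname{sgn}(\theta)\,a\sqrt{1+\frac{m}{a^2R(\theta,a,\ell)}-\frac{\ell}{a^2R(\theta,a,\ell)^2}},$$ with $p=p(a,\ell)$, $\kappa=\kappa(a,\ell)$. Then this map is a canonical (symplectic) diffeomorphism, with inverse $(\Theta,\mathcal A):\mathscr D_\ell\to\mathbb R\times(0,\infty)$, $$\mathcal A(r,v,\ell)=\sqrt{v^2-\frac mr+\frac{\ell}{r^2}},\qquad\Theta(r,v,\ell)=\operatorname{sgn}(v)\,p(a,\ell)\,G_{\kappa(a,\ell)}\Big(\frac{r}{p(a,\ell)}+\kappa(a,\ell)\Big)\Big|_{a=\mathcal A(r,v,\ell)}.$$ Moreover, the solutions of $\dot r=v$, $\dot v=\frac{\ell}{r^3}-\frac m2\frac1{r^2}$ with $v^2-\frac mr+\frac{\ell}{r^2}>0$ are exactly the curves $t\mapsto(R(\theta+ta,a,\ell),V(\theta+ta,a,\ell))$ with parameters $(\theta,a)\in\mathbb R\times(0,\infty)$.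
   Context: Fix $m>0$. For $a,\ell>0$: $\kappa(a,\ell)=(1+4a^2\ell/m^2)^{-1/2}\in(0,1)$, $p(a,\ell)=\frac{m}{2a^2\kappa(a,\ell)}$. For $\kappa\in(0,1)$, $G_\kappa:[1,\infty)\to[0,\infty)$, $G_\kappa(x)=\sqrt{x^2-1}-\kappa\ln(x+\sqrt{x^2-1})$, and $H_\kappa=G_\kappa^{-1}:[0,\infty)\to[1,\infty)$. Canonical means that the map preserves the symplectic form, $dr\wedge dv=d\theta\wedge da$ (equivalently, Poisson brackets $\partial_rf\partial_vg-\partial_vf\partial_rg$ correspond to $\partial_\theta f\partial_ag-\partial_af\partial_\theta g$). *)

(* Defs.v *)
From Stdlib Require Import Reals ClassicalEpsilon.
From Coquelicot Require Import Coquelicot.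
Open Scope R_scope.

Definition sgn (x : R) : R :=
  match Rcase_abs x with
  | left _ => -1
  | right _ => if Req_EM_T x 0 then 0 else 1
  end.

Definition kappa (m a l : R) : R := / sqrt (1 + 4 * a ^ 2 * l / m ^ 2).

Definition pp (m a l : R) : R := m / (2 * a ^ 2 * kappa m a l).

Definition G (k x : R) : R := sqrt (x ^ 2 - 1) - k * ln (x + sqrt (x ^ 2 - 1)).

(* H_k = G_k^{-1} : [0,oo) -> [1,oo): the x >= 1 with G_k x = y
   (chosen by Hilbert's epsilon; it exists and is unique for 0<k<1, y>=0). *)
Definition H (k y : R) : R :=
  epsilon (inhabits 1) (fun x => 1 <= x /\ G k x = y).

Definition Dl (m l r v : R) : Prop := 0 < r /\ v ^ 2 - m / r + l / r ^ 2 > 0.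

Definition Rf (m l th a : R) : R :=
  pp m a l * H (kappa m a l) (Rabs th / pp m a l) - pp m a l * kappa m a l.

Definition Vf (m l th a : R) : R :=
  sgn th * a *
  sqrt (1 + m / (a ^ 2 * Rf m l th a) - l / (a ^ 2 * (Rf m l th a) ^ 2)).

Definition Af (m l r v : R) : R := sqrt (v ^ 2 - m / r + l / r ^ 2).

Definition Thf (m l r v : R) : R :=
  let a := Af m l r v in
  sgn v * pp m a l * G (kappa m a l) (r / pp m a l + kappa m a l).

Fixpoint Ck (n : nat) (U : R -> R -> Prop) (f : R -> R -> R) : Prop :=
  match n with
  | O => forall x y, U x y -> continuous (fun z : R * R => f (fst z) (snd z)) (x, y)
  | S k =>
      (forall x y, U x y -> ex_derive (fun t => f t y) x /\ ex_derive (fun s => f x s) y)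
      /\ Ck k U (fun x y => Derive (fun t => f t y) x)
      /\ Ck k U (fun x y => Derive (fun s => f x s) y)
  end.

Definition smooth (U : R -> R -> Prop) (f : R -> R -> R) : Prop := forall n, Ck n U f.

Definition Hplane (th a : R) : Prop := 0 < a.

(* Main.v *)
Require Import Defs.
From Stdlib Require Import Reals Lra Psatz ClassicalEpsilon FunctionalExtensionality.
From Coquelicot Require Import Coquelicot.
Open Scope R_scope.

Definition open2 (U : R -> R -> Prop) := forall x y, U x y -> locally_2d U x y.
Definition cont2 (U : R -> R -> Prop) (f : R -> R -> R) :=
  forall x y, U x y -> continuous (fun z : R * R => f (fst z) (snd z)) (x, y).
Definition dx (f : R -> R -> R) := fun x y => Derive (fun t => f t y) x.
Definition dy (f : R -> R -> R) := fun x y => Derive (fun s => f x s) y.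
Definition pex (U : R -> R -> Prop) (f : R -> R -> R) :=
  forall x y, U x y -> ex_derive (fun t => f t y) x /\ ex_derive (fun s => f x s) y.

Fixpoint Ckc (n : nat) U f : Prop :=
  cont2 U f /\ match n with O => True | S k => pex U f /\ Ckc k U (dx f) /\ Ckc k U (dy f) end.

Lemma Ckc_Ck n : forall U f, Ckc n U f -> Ck n U f.
Proof.
induction n as [|n IH]; intros U f H; simpl in *.
- apply H.
- destruct H as [_ [H1 [H2 H3]]]. split; [exact H1|]. split; apply IH; assumption.
Qed.

Lemma Ckc_mono n : forall U f, Ckc (S n) U f -> Ckc n U f.
Proof.
induction n as [|n IH]; intros U f H.
- split; [apply H| exact I].
- destruct H as [H0 [H1 [H2 H3]]]. split; [exact H0|]. split; [exact H1|].
  split; apply IH; assumption.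
Qed.

Lemma Ckc_cont n U f : Ckc n U f -> cont2 U f.
Proof. destruct n; intro H; apply H. Qed.

Lemma locally_2d_and_eq (U : R -> R -> Prop) (f g : R -> R -> R) x y : open2 U -> U x y ->
  (forall x y, U x y -> f x y = g x y) -> locally_2d (fun u v => f u v = g u v :> R) x y.
Proof.
intros HU Hxy E. destruct (HU x y Hxy) as [d Hd]. exists d. intros u v H1 H2. apply E, Hd; auto.
Qed.

Lemma cont2_ext U f g : open2 U -> (forall x y, U x y -> f x y = g x y) ->
  cont2 U f -> cont2 U g.
Proof.
intros HU E H x y Hxy.
apply (continuous_ext_loc (fun z : R*R => g (fst z) (snd z)) (fun z : R*R => f (fst z) (snd z))).
+ apply (proj1 (locally_2d_locally (fun u v => f u v = g u v) x y)).
  apply (locally_2d_and_eq U); auto.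
+ apply H; auto.
Qed.

Lemma Ckc_ext n : forall U f g, open2 U -> (forall x y, U x y -> f x y = g x y) ->
  Ckc n U f -> Ckc n U g.
Proof.
induction n as [|n IH]; intros U f g HU E H.
- split; [|exact I]. apply (cont2_ext U f); auto. apply H.
- destruct H as [H0 [H1 [H2 H3]]].
  assert (L : forall x y, U x y -> locally_2d (fun u v => f u v = g u v) x y)
    by (intros; apply (locally_2d_and_eq U); auto).
  split; [|split; [|split]].
  + apply (cont2_ext U f); auto.
  + intros x y Hxy. destruct (H1 x y Hxy) as [Ha Hb]. split.
    * eapply ex_derive_ext_loc; [|exact Ha]. apply (locally_2d_1d_const_y (fun u v => f u v = g u v)). auto.
    * eapply ex_derive_ext_loc; [|exact Hb]. apply (locally_2d_1d_const_x (fun u v => f u v = g u v)). auto.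
  + apply (IH U (dx f)); auto. intros x y Hxy. unfold dx. apply Derive_ext_loc.
    apply (locally_2d_1d_const_y (fun u v => f u v = g u v)). auto.
  + apply (IH U (dy f)); auto. intros x y Hxy. unfold dy. apply Derive_ext_loc.
    apply (locally_2d_1d_const_x (fun u v => f u v = g u v)). auto.
Qed.

Lemma cont2_plus U f g : cont2 U f -> cont2 U g -> cont2 U (fun x y => f x y + g x y).
Proof. intros Hf Hg x y H. exact (continuous_plus _ _ _ (Hf x y H) (Hg x y H)). Qed.
Lemma cont2_mult U f g : cont2 U f -> cont2 U g -> cont2 U (fun x y => f x y * g x y).
Proof. intros Hf Hg x y H. exact (continuous_mult _ _ _ (Hf x y H) (Hg x y H)). Qed.
Lemma cont2_const U c : cont2 U (fun _ _ => c).
Proof. intros x y H. apply continuous_const. Qed.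
Lemma cont2_fst U : cont2 U (fun x _ => x).
Proof. intros x y H. apply continuous_fst. Qed.
Lemma cont2_snd U : cont2 U (fun _ y => y).
Proof. intros x y H. apply continuous_snd. Qed.

Lemma Ckc_plus n : forall U f g, open2 U -> Ckc n U f -> Ckc n U g -> Ckc n U (fun x y => f x y + g x y).
Proof.
induction n as [|n IH]; intros U f g HU Hf Hg.
- split; [|exact I]. apply cont2_plus; [apply Hf|apply Hg].
- destruct Hf as [F0 [F1 [F2 F3]]]. destruct Hg as [G0 [G1 [G2 G3]]].
  split; [apply cont2_plus; auto|]. split; [|split].
  + intros x y H. destruct (F1 x y H), (G1 x y H). split; [apply (ex_derive_plus (fun t => f t y) (fun t => g t y)) | apply (ex_derive_plus (fun t => f x t) (fun t => g x t))]; auto.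
  + apply (Ckc_ext n U (fun x y => dx f x y + dx g x y)); auto.
    intros x y H. destruct (F1 x y H), (G1 x y H). unfold dx. rewrite Derive_plus; auto.
  + apply (Ckc_ext n U (fun x y => dy f x y + dy g x y)); auto.
    intros x y H. destruct (F1 x y H), (G1 x y H). unfold dy. rewrite Derive_plus; auto.
Qed.

Lemma Ckc_mult n : forall U f g, open2 U -> Ckc n U f -> Ckc n U g -> Ckc n U (fun x y => f x y * g x y).
Proof.
induction n as [|n IH]; intros U f g HU Hf Hg.
- split; [|exact I]. apply cont2_mult; [apply Hf|apply Hg].
- pose proof (Ckc_mono _ _ _ Hf) as Mf. pose proof (Ckc_mono _ _ _ Hg) as Mg.
  destruct Hf as [F0 [F1 [F2 F3]]]. destruct Hg as [G0 [G1 [G2 G3]]].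
  split; [apply cont2_mult; auto|]. split; [|split].
  + intros x y H. destruct (F1 x y H), (G1 x y H). split; [apply (ex_derive_mult (fun t => f t y) (fun t => g t y)) | apply (ex_derive_mult (fun t => f x t) (fun t => g x t))]; auto.
  + apply (Ckc_ext n U (fun x y => dx f x y * g x y + f x y * dx g x y)); auto.
    * intros x y H. destruct (F1 x y H), (G1 x y H). unfold dx. rewrite Derive_mult; auto.
    * apply Ckc_plus; auto.
  + apply (Ckc_ext n U (fun x y => dy f x y * g x y + f x y * dy g x y)); auto.
    * intros x y H. destruct (F1 x y H), (G1 x y H). unfold dy. rewrite Derive_mult; auto.
    * apply Ckc_plus; auto.
Qed.

Lemma Ckc_const n : forall U c, open2 U -> Ckc n U (fun _ _ => c).
Proof.
induction n as [|n IH]; intros U c HU.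
- split; [apply cont2_const|exact I].
- split; [apply cont2_const|]. split; [|split].
  + intros x y H; split; apply ex_derive_const.
  + apply (Ckc_ext n U (fun _ _ => 0)); auto. intros; unfold dx; rewrite Derive_const; auto.
  + apply (Ckc_ext n U (fun _ _ => 0)); auto. intros; unfold dy; rewrite Derive_const; auto.
Qed.

Lemma Ckc_fst n : forall U, open2 U -> Ckc n U (fun x _ => x).
Proof.
destruct n as [|n]; intros U HU.
- split; [apply cont2_fst|exact I].
- split; [apply cont2_fst|]. split; [|split].
  + intros x y H; split; [apply ex_derive_id|apply ex_derive_const].
  + apply (Ckc_ext n U (fun _ _ => 1)); [auto| |apply Ckc_const; auto]. intros; unfold dx; rewrite Derive_id; auto.
  + apply (Ckc_ext n U (fun _ _ => 0)); [auto| |apply Ckc_const; auto]. intros; unfold dy; rewrite Derive_const; auto.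
Qed.

Lemma Ckc_snd n : forall U, open2 U -> Ckc n U (fun _ y => y).
Proof.
destruct n as [|n]; intros U HU.
- split; [apply cont2_snd|exact I].
- split; [apply cont2_snd|]. split; [|split].
  + intros x y H; split; [apply ex_derive_const|apply ex_derive_id].
  + apply (Ckc_ext n U (fun _ _ => 0)); [auto| |apply Ckc_const; auto]. intros; unfold dx; rewrite Derive_const; auto.
  + apply (Ckc_ext n U (fun _ _ => 1)); [auto| |apply Ckc_const; auto]. intros; unfold dy; rewrite Derive_id; auto.
Qed.

Fixpoint Cs1 (n : nat) (W : R -> Prop) (phi : R -> R) : Prop :=
  match n with
  | O => forall x, W x -> continuous phi x
  | S k => (forall x, W x -> ex_derive phi x) /\ Cs1 k W (Derive phi)
  end.

Lemma Cs1_cont n W phi : Cs1 n W phi -> forall x, W x -> continuous phi x.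
Proof.
destruct n; simpl; intros H x Hx. apply H; auto. apply (ex_derive_continuous phi), H; auto.
Qed.

Lemma Ckc_comp1 n : forall U W phi f, open2 U -> Cs1 n W phi -> Ckc n U f ->
  (forall x y, U x y -> W (f x y)) -> Ckc n U (fun x y => phi (f x y)).
Proof.
induction n as [|n IH]; intros U W phi f HU Hphi Hf HW.
- split; [|exact I]. intros x y H.
  apply (continuous_comp (fun z : R*R => f (fst z) (snd z)) phi). apply Hf; auto.
  apply (Cs1_cont 0 W phi Hphi); auto.
- pose proof (Ckc_mono _ _ _ Hf) as Mf. pose proof (Cs1_cont _ _ _ Hphi) as Cphi.
  destruct Hphi as [P1 P2]. destruct Hf as [F0 [F1 [F2 F3]]].
  split; [|split; [|split]].
  + intros x y H. apply (continuous_comp (fun z : R*R => f (fst z) (snd z)) phi). apply F0; auto.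
    apply Cphi; auto.
  + intros x y H. destruct (F1 x y H) as [Ha Hb]. split.
    * apply (ex_derive_comp phi (fun t => f t y)); auto.
    * apply (ex_derive_comp phi (fun t => f x t)); auto.
  + apply (Ckc_ext n U (fun x y => Derive phi (f x y) * dx f x y)); auto.
    * intros x y H. destruct (F1 x y H) as [Ha Hb]. unfold dx.
      symmetry. rewrite (Derive_comp phi (fun t => f t y)); auto. apply Rmult_comm.
    * apply Ckc_mult; auto. apply (IH U W); auto.
  + apply (Ckc_ext n U (fun x y => Derive phi (f x y) * dy f x y)); auto.
    * intros x y H. destruct (F1 x y H) as [Ha Hb]. unfold dy.
      symmetry. rewrite (Derive_comp phi (fun t => f x t)); auto. apply Rmult_comm.
    * apply Ckc_mult; auto. apply (IH U W); auto.
Qed.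

Definition open1 (W : R -> Prop) := forall x, W x -> locally x W.

Lemma Cs1_ext (n : nat) : forall (W : R -> Prop) (phi psi : R -> R), open1 W -> (forall x, W x -> phi x = psi x) ->
  Cs1 n W phi -> Cs1 n W psi.
Proof.
induction n as [|n IH]; intros W phi psi HW E H; simpl in *.
- intros x Hx. apply (continuous_ext_loc psi phi). 
  + generalize (HW x Hx). apply filter_imp. intros; auto.
  + auto.
- destruct H as [H1 H2]. split.
  + intros x Hx. apply (ex_derive_ext_loc phi); auto. generalize (HW x Hx). apply filter_imp. auto.
  + apply (IH W (Derive phi)); auto. intros x Hx. apply Derive_ext_loc.
    generalize (HW x Hx). apply filter_imp. auto.
Qed.

Lemma Derive_exp_fun : Derive exp = exp.
Proof.
apply functional_extensionality. intro x. apply is_derive_unique.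
apply is_derive_Reals, derivable_pt_lim_exp.
Qed.

Lemma Cs1_exp (n : nat) : forall W, Cs1 n W exp.
Proof.
induction n as [|n IH]; intros W; simpl.
- intros x _. apply (ex_derive_continuous exp). exists (exp x). apply is_derive_Reals, derivable_pt_lim_exp.
- split. intros x _. exists (exp x). apply is_derive_Reals, derivable_pt_lim_exp.
  rewrite Derive_exp_fun. auto.
Qed.

Definition posR (x : R) := 0 < x.

Lemma open1_pos : open1 posR.
Proof.
intros x Hx. exists (mkposreal x Hx). intros y Hy. unfold posR.
change (Rabs (y - x) < x) in Hy. apply Rabs_def2 in Hy. lra.
Qed.

Lemma Cs1_pow (n : nat) : forall c al, Cs1 n posR (fun x => c * Rpower x al).
Proof.
induction n as [|n IH]; intros c al; simpl.
- intros x Hx. apply (ex_derive_continuous (fun x => c * Rpower x al)).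
  exists (c * (al * Rpower x (al - 1))). apply is_derive_Reals.
  apply derivable_pt_lim_scal. apply derivable_pt_lim_power; auto.
- split.
  + intros x Hx. exists (c * (al * Rpower x (al - 1))). apply is_derive_Reals.
    apply derivable_pt_lim_scal. apply derivable_pt_lim_power; auto.
  + apply (Cs1_ext n posR (fun x => (c * al) * Rpower x (al - 1))); auto.
    * apply open1_pos.
    * intros x Hx. symmetry. apply is_derive_unique. apply is_derive_Reals.
      replace (c * al * Rpower x (al - 1)) with (c * (al * Rpower x (al - 1))) by ring.
      apply derivable_pt_lim_scal. apply derivable_pt_lim_power; auto.
Qed.

Lemma Cs1_inv (n : nat) : Cs1 n posR Rinv.
Proof.
apply (Cs1_ext n posR (fun x => 1 * Rpower x (-1))). apply open1_pos.
intros x Hx. replace (-1) with (- (1)) by ring. rewrite Rpower_Ropp, Rpower_1; auto. ring.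
apply Cs1_pow.
Qed.

Lemma Cs1_sqrt (n : nat) : Cs1 n posR sqrt.
Proof.
apply (Cs1_ext n posR (fun x => 1 * Rpower x (/2))). apply open1_pos.
intros x Hx. rewrite Rpower_sqrt; auto. ring.
apply Cs1_pow.
Qed.

Lemma Cs1_ln (n : nat) : Cs1 n posR ln.
Proof.
destruct n as [|n]; simpl.
- intros x Hx. apply (ex_derive_continuous ln). exists (/x). apply is_derive_ln; auto.
- split. intros x Hx. exists (/x). apply is_derive_ln; auto.
  apply (Cs1_ext n posR Rinv). apply open1_pos.
  intros x Hx. symmetry. apply is_derive_unique, is_derive_ln; auto.
  apply Cs1_inv.
Qed.

Definition Sm U f := forall n, Ckc n U f.

Section SmL.
Variable U : R -> R -> Prop.
Hypothesis HU : open2 U.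

Lemma Sm_plus f g : Sm U f -> Sm U g -> Sm U (fun x y => f x y + g x y).
Proof. intros A B n. apply Ckc_plus; auto. Qed.
Lemma Sm_mult f g : Sm U f -> Sm U g -> Sm U (fun x y => f x y * g x y).
Proof. intros A B n. apply Ckc_mult; auto. Qed.
Lemma Sm_const c : Sm U (fun _ _ => c).
Proof. intros n. apply Ckc_const; auto. Qed.
Lemma Sm_fst : Sm U (fun x _ => x).
Proof. intros n. apply Ckc_fst; auto. Qed.
Lemma Sm_snd : Sm U (fun _ y => y).
Proof. intros n. apply Ckc_snd; auto. Qed.
Lemma Sm_ext f g : (forall x y, U x y -> f x y = g x y) -> Sm U f -> Sm U g.
Proof. intros E A n. apply (Ckc_ext n U f); auto. Qed.
Lemma Sm_opp f : Sm U f -> Sm U (fun x y => - f x y).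
Proof. intros A. apply (Sm_ext (fun x y => (-1) * f x y)). intros; ring.
  apply Sm_mult; auto. apply Sm_const. Qed.
Lemma Sm_minus f g : Sm U f -> Sm U g -> Sm U (fun x y => f x y - g x y).
Proof. intros A B. apply Sm_plus; auto. apply Sm_opp; auto. Qed.
Lemma Sm_exp f : Sm U f -> Sm U (fun x y => exp (f x y)).
Proof. intros A n. apply (Ckc_comp1 n U (fun _ => True)); auto. apply Cs1_exp. Qed.
Lemma Sm_inv f : Sm U f -> (forall x y, U x y -> 0 < f x y) -> Sm U (fun x y => / f x y).
Proof. intros A P n. apply (Ckc_comp1 n U posR); auto. apply Cs1_inv. Qed.
Lemma Sm_sqrt f : Sm U f -> (forall x y, U x y -> 0 < f x y) -> Sm U (fun x y => sqrt (f x y)).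
Proof. intros A P n. apply (Ckc_comp1 n U posR); auto. apply Cs1_sqrt. Qed.
Lemma Sm_ln f : Sm U f -> (forall x y, U x y -> 0 < f x y) -> Sm U (fun x y => ln (f x y)).
Proof. intros A P n. apply (Ckc_comp1 n U posR); auto. apply Cs1_ln. Qed.
Lemma Sm_div f g : Sm U f -> Sm U g -> (forall x y, U x y -> 0 < g x y) -> Sm U (fun x y => f x y / g x y).
Proof. intros A B P. apply Sm_mult; auto. apply Sm_inv; auto. Qed.
Lemma Sm_dx f : Sm U f -> Sm U (dx f).
Proof. intros A n. apply (A (S n)). Qed.
Lemma Sm_dy f : Sm U f -> Sm U (dy f).
Proof. intros A n. apply (A (S n)). Qed.
Lemma Sm_cosh f : Sm U f -> Sm U (fun x y => cosh (f x y)).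
Proof. intros A. unfold cosh. apply Sm_div; [|apply Sm_const|intros; lra].
  apply Sm_plus; apply Sm_exp; auto. apply Sm_opp; auto. Qed.
Lemma Sm_sinh f : Sm U f -> Sm U (fun x y => sinh (f x y)).
Proof. intros A. unfold sinh. apply Sm_div; [|apply Sm_const|intros; lra].
  apply Sm_minus; apply Sm_exp; auto. apply Sm_opp; auto. Qed.
Lemma Sm_pow2 f : Sm U f -> Sm U (fun x y => (f x y) ^ 2).
Proof. intros A. apply (Sm_ext (fun x y => f x y * f x y)). intros; ring. apply Sm_mult; auto. Qed.
End SmL.

Lemma ballR (x e y : R) : ball x e y <-> Rabs (y - x) < e.
Proof. split; intro H; exact H. Qed.

Lemma locR (x : R) (P : R -> Prop) : locally x P <-> exists d : posreal, forall y, Rabs (y - x) < d -> P y.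
Proof. split; intros [d H]; exists d; intros y Hy; apply H; apply ballR; auto. Qed.

Lemma contR (g : R -> R) x0 : continuous g x0 <->
  forall eps : posreal, exists d : posreal, forall x, Rabs (x - x0) < d -> Rabs (g x - g x0) < eps.
Proof.
unfold continuous. rewrite filterlim_locally. split.
- intros H eps. destruct (proj1 (locR _ _) (H eps)) as [d Hd]. exists d. intros x Hx. apply ballR, Hd; auto.
- intros H eps. apply locR. destruct (H eps) as [d Hd]. exists d. intros x Hx. apply ballR, Hd; auto.
Qed.

Lemma cara_to (f g : R -> R) x0 : locally x0 (fun x => f x - f x0 = (x - x0) * g x) ->
  continuous g x0 -> is_derive f x0 (g x0).
Proof.
intros L C. apply is_derive_Reals. intros eps He.
destruct (proj1 (locR _ _) L) as [d1 H1]. destruct (proj1 (contR _ _) C (mkposreal eps He)) as [d2 H2].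
assert (Hd : 0 < Rmin d1 d2) by (apply Rmin_pos; apply cond_pos).
exists (mkposreal _ Hd). intros h Hh0 Hh. simpl in Hh.
assert (A1 : Rabs (x0 + h - x0) < d1) by (replace (x0 + h - x0) with h by ring; apply Rlt_le_trans with (1 := Hh), Rmin_l).
assert (A2 : Rabs (x0 + h - x0) < d2) by (replace (x0 + h - x0) with h by ring; apply Rlt_le_trans with (1 := Hh), Rmin_r).
rewrite (H1 _ A1). replace ((x0 + h - x0) * g (x0 + h) / h) with (g (x0 + h)) by (field; auto).
apply (H2 _ A2).
Qed.

Definition dq (f : R -> R) x0 l := fun x => match Req_EM_T x x0 with left _ => l | right _ => (f x - f x0) / (x - x0) end.

Lemma cara_from (f : R -> R) x0 l : is_derive f x0 l ->
  continuous (dq f x0 l) x0 /\ dq f x0 l x0 = l /\ (forall x, f x - f x0 = (x - x0) * dq f x0 l x).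
Proof.
intros D. assert (E0 : dq f x0 l x0 = l) by (unfold dq; destruct Req_EM_T; congruence).
split; [|split; [exact E0|]].
- apply contR. intros eps. apply is_derive_Reals in D. destruct (D eps (cond_pos eps)) as [d Hd].
  exists d. intros x Hx. rewrite E0. unfold dq. destruct Req_EM_T as [e|n].
  + rewrite Rminus_eq_0, Rabs_R0. apply cond_pos.
  + replace x with (x0 + (x - x0)) by ring. replace (x0 + (x - x0) - x0) with (x - x0) by ring.
    apply Hd; auto. intro; apply n; lra.
- intros x. unfold dq. destruct Req_EM_T as [e|n].
  + subst; ring.
  + field. intro; apply n; lra.
Qed.

Lemma cosh_sinh2 x : cosh x ^ 2 = 1 + sinh x ^ 2.
Proof.
assert (E : exp x * exp (- x) = 1) by (rewrite <- exp_plus; replace (x + - x) with 0 by ring; apply exp_0).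
assert (cosh x ^2 - (1 + sinh x ^2) = exp x * exp (-x) - 1) by (unfold cosh, sinh; field). lra.
Qed.

Lemma cosh_ge1 x : 1 <= cosh x.
Proof.
assert (E : exp x * exp (- x) = 1) by (rewrite <- exp_plus; replace (x + - x) with 0 by ring; apply exp_0).
pose proof (exp_pos x). pose proof (exp_pos (-x)).
assert (S : 0 <= (exp x - exp (-x)) ^ 2) by apply pow2_ge_0.
assert (exp x + exp (-x) >= 2) by nra. unfold cosh. lra.
Qed.

Lemma cosh_pos x : 0 < cosh x.
Proof. pose proof (cosh_ge1 x); lra. Qed.

Lemma cosh_plus_sinh x : cosh x + sinh x = exp x.
Proof. unfold cosh, sinh; field. Qed.

Lemma sinh_opp x : sinh (- x) = - sinh x.
Proof. unfold sinh. rewrite Ropp_involutive. field. Qed.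
Lemma cosh_opp x : cosh (- x) = cosh x.
Proof. unfold cosh. rewrite Ropp_involutive. field. Qed.

Lemma is_derive_sinh x : is_derive sinh x (cosh x).
Proof. apply is_derive_Reals, derivable_pt_lim_sinh. Qed.
Lemma is_derive_cosh x : is_derive cosh x (sinh x).
Proof. apply is_derive_Reals, derivable_pt_lim_cosh. Qed.

Lemma MVT_sinh s0 s1 : exists xi, Rabs (xi - s0) <= Rabs (s1 - s0) /\
  sinh s1 - sinh s0 = cosh xi * (s1 - s0).
Proof.
destruct (MVT_gen sinh s0 s1 cosh) as [c [Hc E]].
- intros; apply is_derive_sinh.
- intros. apply continuity_pt_filterlim. apply (ex_derive_continuous sinh). eexists; apply is_derive_sinh.
- exists c. split; [|exact E]. destruct (Rle_dec s0 s1).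
  + rewrite Rmin_left, Rmax_right in Hc by lra. rewrite !Rabs_right by lra. lra.
  + rewrite Rmin_right, Rmax_left in Hc by lra. rewrite !Rabs_left1 by lra. lra.
Qed.

Lemma sinh_ge x : 0 <= x -> x <= sinh x.
Proof.
intros H. destruct (MVT_sinh 0 x) as [c [_ E]]. replace (sinh 0) with 0 in E by (unfold sinh; rewrite Ropp_0; field).
pose proof (cosh_ge1 c). nra.
Qed.

Lemma sinh_pos x : 0 < x -> 0 < sinh x.
Proof. intros; pose proof (sinh_ge x); lra. Qed.
Lemma sinh_neg x : x < 0 -> sinh x < 0.
Proof. intros. pose proof (sinh_pos (-x)). rewrite sinh_opp in H0. lra. Qed.
Lemma sinh_0 : sinh 0 = 0.
Proof. unfold sinh; rewrite Ropp_0; field. Qed.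
Lemma cosh_0 : cosh 0 = 1.
Proof. unfold cosh; rewrite Ropp_0, exp_0; field. Qed.

Definition sig (k s : R) := sinh s - k * s.

Lemma sig_mvt k0 k1 s0 s1 : exists xi, Rabs (xi - s0) <= Rabs (s1 - s0) /\
  (s1 - s0) * (cosh xi - k1) = sig k1 s1 - sig k0 s0 + (k1 - k0) * s0.
Proof.
destruct (MVT_sinh s0 s1) as [c [H E]]. exists c. split; auto. unfold sig. nra.
Qed.

Lemma sig_strict k s0 s1 : k < 1 -> s0 < s1 -> sig k s0 < sig k s1.
Proof.
intros Hk H. destruct (sig_mvt k k s0 s1) as [c [_ E]]. pose proof (cosh_ge1 c). nra.
Qed.

Lemma sig_inj k s0 s1 : k < 1 -> sig k s0 = sig k s1 -> s0 = s1.
Proof.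
intros Hk E. destruct (Rtotal_order s0 s1) as [h|[h|h]]; auto.
- pose proof (sig_strict k _ _ Hk h); lra.
- pose proof (sig_strict k _ _ Hk h); lra.
Qed.

Lemma sig_sign k s : k < 1 -> (0 < s <-> 0 < sig k s) /\ (s < 0 <-> sig k s < 0) /\ (s = 0 <-> sig k s = 0).
Proof.
intros Hk. assert (Z : sig k 0 = 0) by (unfold sig; rewrite sinh_0; ring).
destruct (Rtotal_order s 0) as [h|[h|h]].
- pose proof (sig_strict k _ _ Hk h). lra.
- subst. lra.
- pose proof (sig_strict k _ _ Hk h). lra.
Qed.

Lemma sig_surj k y : 0 <= k < 1 -> exists s, sig k s = y.
Proof.
intros Hk. set (a := y / (1 - k)).
assert (C : continuity (sig k)).
{ intro x. apply continuity_pt_filterlim. unfold sig.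
  apply (ex_derive_continuous (fun s => sinh s - k * s)). auto_derive; auto. }
destruct (sig_mvt k k 0 a) as [c [_ E]]. unfold sig in E at 2. rewrite sinh_0 in E.
assert (Ea : sig k a = a * (cosh c - k)) by lra.
pose proof (cosh_ge1 c).
assert (Ha : y = a * (1 - k)) by (unfold a; field; lra).
destruct (IVT_gen (sig k) a 0 y C) as [s [_ Hs]].
- assert (Z : sig k 0 = 0) by (unfold sig; rewrite sinh_0; ring). rewrite Z.
  destruct (Rle_dec 0 a).
  + rewrite Rmin_right, Rmax_left; nra.
  + rewrite Rmin_left, Rmax_right; nra.
- exists s; auto.
Qed.

Definition Sinv (k y : R) : R := epsilon (inhabits 0) (fun s => sig k s = y).

Lemma Sinv_spec k y : 0 <= k < 1 -> sig k (Sinv k y) = y.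
Proof.
intros Hk. unfold Sinv. apply (epsilon_spec (inhabits 0) (fun s => sig k s = y)). apply sig_surj; auto.
Qed.

Lemma Sinv_sig k s : 0 <= k < 1 -> Sinv k (sig k s) = s.
Proof. intros Hk. apply (sig_inj k); [lra|]. apply Sinv_spec; auto. Qed.

Lemma impl_deriv (s c N : R -> R) x0 n0 :
  continuous s x0 -> continuous c x0 -> is_derive N x0 n0 -> c x0 < 1 ->
  locally x0 (fun x => exists xi, Rabs (xi - s x0) <= Rabs (s x - s x0) /\
                     (s x - s x0) * (cosh xi - c x) = N x - N x0) ->
  is_derive s x0 (n0 / (cosh (s x0) - c x0)).
Proof.
intros Cs Cc DN Hc L.
set (P := fun x xi => Rabs (xi - s x0) <= Rabs (s x - s x0) /\ (s x - s x0) * (cosh xi - c x) = N x - N x0).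
set (xi := fun x => epsilon (inhabits 0) (P x)).
assert (Lxi : locally x0 (fun x => P x (xi x))).
{ generalize L. apply filter_imp. intros x Hx. apply (epsilon_spec (inhabits 0) (P x)). exact Hx. }
assert (X0 : xi x0 = s x0).
{ destruct (proj1 (locR _ _) Lxi) as [d Hd]. destruct (Hd x0) as [H _].
  rewrite Rminus_eq_0, Rabs_R0; apply cond_pos.
  rewrite Rminus_eq_0, Rabs_R0 in H. pose proof (Rabs_pos (xi x0 - s x0)).
  assert (Rabs (xi x0 - s x0) = 0) by lra. apply Rabs_eq_0 in H1. lra. }
assert (Cxi : continuous xi x0).
{ apply contR. intros eps. destruct (proj1 (locR _ _) Lxi) as [d1 H1].
  destruct (proj1 (contR _ _) Cs eps) as [d2 H2].
  assert (Hd : 0 < Rmin d1 d2) by (apply Rmin_pos; apply cond_pos).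
  exists (mkposreal _ Hd). intros x Hx. simpl in Hx. rewrite X0.
  destruct (H1 x) as [A _]. apply Rlt_le_trans with (1 := Hx), Rmin_l.
  eapply Rle_lt_trans. exact A. apply H2. apply Rlt_le_trans with (1 := Hx), Rmin_r. }
set (D := fun x => cosh (xi x) - c x).
assert (CD : continuous D x0).
{ apply (continuous_minus (fun x => cosh (xi x)) c); auto.
  apply (continuous_comp xi cosh); auto. apply (ex_derive_continuous cosh). eexists; apply is_derive_cosh. }
assert (D0 : D x0 = cosh (s x0) - c x0) by (unfold D; rewrite X0; auto).
assert (D0p : 0 < D x0) by (rewrite D0; pose proof (cosh_ge1 (s x0)); lra).
assert (LD : locally x0 (fun x => 0 < D x)).
{ destruct (proj1 (contR _ _) CD (mkposreal _ D0p)) as [d Hd]. apply locR. exists d.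
  intros x Hx. specialize (Hd x Hx). simpl in Hd. apply Rabs_def2 in Hd. lra. }
destruct (cara_from N x0 n0 DN) as [Cq [Eq Fq]].
set (g := fun x => dq N x0 n0 x * / D x).
assert (Cg : continuous g x0).
{ apply (continuous_mult (dq N x0 n0) (fun x => / D x)); auto.
  apply continuous_Rinv_comp; auto. lra. }
replace (n0 / (cosh (s x0) - c x0)) with (g x0) by (unfold g; rewrite Eq, D0; auto).
apply cara_to; auto.
generalize (filter_and _ _ Lxi LD). apply filter_imp. intros x [[_ H] Hp].
unfold g. replace ((x - x0) * (dq N x0 n0 x * / D x)) with ((x - x0) * dq N x0 n0 x / D x) by (field; lra).
rewrite <- Fq, <- H. fold (xi x). fold (D x). field. lra.
Qed.

Lemma inv_eq a b : a * b = 1 -> / a = b.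
Proof. intros H. assert (a <> 0) by (intro; subst; lra).
apply Rmult_eq_reg_l with a; auto. rewrite Rinv_r; auto. Qed.

Lemma sig_opp k s : sig k (- s) = - sig k s.
Proof. unfold sig. rewrite sinh_opp. ring. Qed.

Lemma sig_abs k s : k < 1 -> Rabs (sig k s) = sig k (Rabs s).
Proof.
intros Hk. destruct (sig_sign k s Hk) as [A [B C]].
destruct (Rle_dec 0 s).
- rewrite (Rabs_right s) by lra. apply Rabs_right. destruct (Req_dec s 0). apply C in H; lra.
  assert (0 < sig k s) by (apply A; lra). lra.
- rewrite (Rabs_left s) by lra. rewrite sig_opp. apply Rabs_left. apply B; lra.
Qed.

Lemma sqrt_sq_abs x : sqrt (x ^ 2) = Rabs x.
Proof. rewrite <- pow2_abs. apply sqrt_pow2, Rabs_pos. Qed.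

Lemma sqrt_cosh2 s : sqrt (cosh s ^ 2 - 1) = Rabs (sinh s).
Proof. rewrite cosh_sinh2. replace (1 + sinh s ^ 2 - 1) with (sinh s ^ 2) by ring. apply sqrt_sq_abs. Qed.

Lemma G_cosh k s : k < 1 -> G k (cosh s) = Rabs (sig k s).
Proof.
intros Hk. unfold G. rewrite sqrt_cosh2, sig_abs by auto.
destruct (Rle_dec 0 s).
- rewrite (Rabs_right s) by lra. rewrite (Rabs_right (sinh s)) by (pose proof (sinh_ge s); lra).
  rewrite cosh_plus_sinh, ln_exp. reflexivity.
- rewrite (Rabs_left s) by lra. rewrite (Rabs_left1 (sinh s)) by (pose proof (sinh_neg s); lra).
  rewrite <- cosh_opp, <- sinh_opp, cosh_plus_sinh, ln_exp. reflexivity.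
Qed.

Lemma acosh_ex x : 1 <= x -> exists s, 0 <= s /\ cosh s = x.
Proof.
intros Hx. set (q := sqrt (x ^ 2 - 1)).
assert (Hq : q * q = x ^ 2 - 1) by (apply sqrt_sqrt; nra).
assert (Hq0 : 0 <= q) by apply sqrt_pos.
exists (ln (x + q)). split.
- destruct (Rle_dec 0 (ln (x + q))); auto.
  assert (exp (ln (x + q)) < exp 0) by (apply exp_increasing; lra).
  rewrite exp_ln, exp_0 in H by lra. lra.
- unfold cosh. rewrite exp_Ropp, exp_ln by lra.
  assert (E1 : (x + q) * (x - q) = 1) by nra.
  replace (/ (x + q)) with (x - q). field.
  symmetry; apply inv_eq; auto.
Qed.

Lemma H_spec k s : 0 <= k < 1 -> H k (Rabs (sig k s)) = cosh s.
Proof.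
intros Hk. unfold H.
set (Pr := fun x => 1 <= x /\ G k x = Rabs (sig k s)).
assert (Ex : exists x, Pr x) by (exists (cosh s); split; [apply cosh_ge1|apply G_cosh; lra]).
pose proof (epsilon_spec (inhabits 1) Pr Ex) as [H1 H2].
set (x' := epsilon (inhabits 1) Pr) in *.
destruct (acosh_ex x' H1) as [s' [Hs' Ec]].
rewrite <- Ec in H2. rewrite G_cosh in H2 by lra. rewrite !sig_abs in H2 by lra.
rewrite (Rabs_right s') in H2 by lra. apply sig_inj in H2; [|lra].
rewrite <- Ec, H2. destruct (Rle_dec 0 s).
- rewrite Rabs_right; lra.
- rewrite Rabs_left by lra. apply cosh_opp.
Qed.

Definition ash (w : R) := ln (w + sqrt (w ^ 2 + 1)).

Lemma ash_arg w : 0 < w + sqrt (w ^ 2 + 1).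
Proof.
assert (Hq : sqrt (w^2+1) * sqrt (w^2+1) = w^2+1) by (apply sqrt_sqrt; nra).
pose proof (sqrt_pos (w^2+1)). nra.
Qed.

Lemma ash_exp w : exp (ash w) = w + sqrt (w ^ 2 + 1).
Proof. unfold ash. apply exp_ln, ash_arg. Qed.

Lemma sinh_ash w : sinh (ash w) = w.
Proof.
pose proof (ash_arg w). assert (Hq : sqrt (w^2+1) * sqrt (w^2+1) = w^2+1) by (apply sqrt_sqrt; nra).
unfold sinh. rewrite exp_Ropp, ash_exp.
assert (E1 : (w + sqrt (w^2+1)) * (sqrt (w^2+1) - w) = 1) by nra.
replace (/ (w + sqrt (w ^ 2 + 1))) with (sqrt (w^2+1) - w). field.
symmetry; apply inv_eq; auto.
Qed.

Lemma cosh_ash w : cosh (ash w) = sqrt (w ^ 2 + 1).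
Proof.
pose proof (ash_arg w). assert (Hq : sqrt (w^2+1) * sqrt (w^2+1) = w^2+1) by (apply sqrt_sqrt; nra).
unfold cosh. rewrite exp_Ropp, ash_exp.
assert (E1 : (w + sqrt (w^2+1)) * (sqrt (w^2+1) - w) = 1) by nra.
replace (/ (w + sqrt (w ^ 2 + 1))) with (sqrt (w^2+1) - w). field.
symmetry; apply inv_eq; auto.
Qed.

Lemma ash_sinh s : ash (sinh s) = s.
Proof.
unfold ash. replace (sinh s ^ 2 + 1) with (cosh s ^ 2) by (rewrite cosh_sinh2; ring). rewrite sqrt_pow2 by (pose proof (cosh_ge1 s); lra).
rewrite Rplus_comm, cosh_plus_sinh. apply ln_exp.
Qed.

Lemma sgn_pos x : 0 < x -> sgn x = 1.
Proof. intros. unfold sgn. destruct Rcase_abs; [lra|]. destruct Req_EM_T; [lra|auto]. Qed.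
Lemma sgn_neg x : x < 0 -> sgn x = -1.
Proof. intros. unfold sgn. destruct Rcase_abs; [auto|lra]. Qed.
Lemma sgn_0 : sgn 0 = 0.
Proof. unfold sgn. destruct Rcase_abs; [lra|]. destruct Req_EM_T; [auto|lra]. Qed.

Lemma K_facts m l a : 0 < m -> 0 < l -> 0 < a ->
  0 < kappa m a l < 1 /\ l = m^2 * (1 - kappa m a l ^2) / (4 * a^2 * kappa m a l ^2).
Proof.
intros hm hl ha. unfold kappa.
assert (Harg : 1 < 1 + 4 * a ^ 2 * l / m ^ 2).
{ assert (0 < a^2) by (apply pow_lt; lra). assert (0 < m^2) by (apply pow_lt; lra).
  assert (0 < 4 * a ^ 2 * l / m ^ 2) by (apply Rdiv_lt_0_compat; nra). lra. }
set (S := sqrt (1 + 4 * a ^ 2 * l / m ^ 2)).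
assert (HS : S * S = 1 + 4 * a ^ 2 * l / m ^ 2) by (apply sqrt_sqrt; lra).
assert (S1 : 1 < S).
{ assert (sqrt 1 < S) by (apply sqrt_lt_1; lra). rewrite sqrt_1 in H. exact H. }
split; [split|].
- apply Rinv_0_lt_compat; lra.
- rewrite <- Rinv_1. apply Rinv_lt_contravar; lra.
- replace ((/ S) ^ 2) with (/ (S * S)) by (field; lra). rewrite HS.
  assert (0 < a^2) by (apply pow_lt; lra). assert (0 < m^2) by (apply pow_lt; lra).
  field. split; [lra|split; [nra|lra]].
Qed.

Lemma K_deriv m l a : 0 < m -> 0 < l -> 0 < a ->
  is_derive (fun s => kappa m s l) a (- kappa m a l * (1 - kappa m a l ^ 2) / a).
Proof.
intros hm hl ha.
assert (0 < a^2) by (apply pow_lt; lra). assert (0 < m^2) by (apply pow_lt; lra).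
assert (0 < 4 * a ^ 2 * l / m ^ 2) by (apply Rdiv_lt_0_compat; nra).
unfold kappa. auto_derive.
- replace (4 * (a * (a * 1)) * l * / (m * (m * 1))) with (4 * a ^ 2 * l / m ^ 2) by (field; lra).
  split; [lra|split; auto]. apply Rgt_not_eq, sqrt_lt_R0; lra.
- replace (4 * (a * (a * 1)) * l * / (m * (m * 1))) with (4 * a ^ 2 * l / m ^ 2) by (field; lra).
  set (S := sqrt (1 + 4 * a ^ 2 * l / m ^ 2)).
  assert (HS : S * S = 1 + 4 * a ^ 2 * l / m ^ 2) by (apply sqrt_sqrt; lra).
  assert (S0 : 0 < S) by (apply sqrt_lt_R0; lra).
  clearbody S.
  assert (Hl : l = (S * S - 1) * m ^ 2 / (4 * a ^ 2)) by (rewrite HS; field; lra).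
  rewrite Hl. field. lra.
Qed.

Lemma invP_deriv m l a : 0 < m -> 0 < l -> 0 < a ->
  is_derive (fun s => / pp m s l) a ((1 + kappa m a l ^ 2) / (a * pp m a l)).
Proof.
intros hm hl ha. destruct (K_facts m l a hm hl ha) as [[K0 K1] _].
apply (is_derive_ext_loc (fun s => 2 * s ^ 2 * kappa m s l / m)).
{ assert (E : forall s : R, 0 < s -> 2 * s ^ 2 * kappa m s l / m = / pp m s l).
  { intros s Hs. unfold pp. destruct (K_facts m l s hm hl Hs) as [[K0' _] _]. field. repeat split; lra. }
  generalize (open1_pos a ha). apply filter_imp. intros s Hs. apply E, Hs. }
pose proof (K_deriv m l a hm hl ha) as D.
auto_derive.
- eexists; exact D.
- replace (Derive (fun x : R => kappa m x l) a) with (- kappa m a l * (1 - kappa m a l ^ 2) / a) by (symmetry; apply is_derive_unique; exact D).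
  unfold pp. field. repeat split; lra.
Qed.

Lemma alg_V m l a k c sh : 0 < m -> 0 < a -> 0 < k < 1 -> 1 <= c -> c ^ 2 = 1 + sh ^ 2 ->
  l = m ^ 2 * (1 - k ^ 2) / (4 * a ^ 2 * k ^ 2) ->
  1 + m / (a ^ 2 * (m / (2 * a ^ 2 * k) * (c - k))) - l / (a ^ 2 * (m / (2 * a ^ 2 * k) * (c - k)) ^ 2)
  = (sh / (c - k)) ^ 2.
Proof.
intros hm ha hk hc Hc Hl. subst l.
replace ((sh / (c - k)) ^ 2) with ((c ^ 2 - 1) / (c - k) ^ 2) by (rewrite Hc; field; lra).
field. repeat split; lra.
Qed.

Lemma alg_E m l a k c sh : 0 < m -> 0 < a -> 0 < k < 1 -> 1 <= c -> c ^ 2 = 1 + sh ^ 2 ->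
  l = m ^ 2 * (1 - k ^ 2) / (4 * a ^ 2 * k ^ 2) ->
  (a * sh / (c - k)) ^ 2 - m / (m / (2 * a ^ 2 * k) * (c - k)) + l / (m / (2 * a ^ 2 * k) * (c - k)) ^ 2
  = a ^ 2.
Proof.
intros hm ha hk hc Hc Hl. subst l.
replace ((a * sh / (c - k)) ^ 2) with (a ^ 2 * (c ^ 2 - 1) / (c - k) ^ 2) by (rewrite Hc; field; lra).
field. repeat split; lra.
Qed.

Lemma alg_w m l a k r v : 0 < m -> 0 < a -> 0 < k < 1 -> 0 < r ->
  a ^ 2 = v ^ 2 - m / r + l / r ^ 2 ->
  l = m ^ 2 * (1 - k ^ 2) / (4 * a ^ 2 * k ^ 2) ->
  (r / (m / (2 * a ^ 2 * k)) + k) ^ 2 = (v * r / (a * (m / (2 * a ^ 2 * k)))) ^ 2 + 1.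
Proof.
intros hm ha hk hr Ha Hl.
assert (Hv : v ^ 2 = a ^ 2 + m / r - l / r ^ 2) by lra.
replace ((v * r / (a * (m / (2 * a ^ 2 * k)))) ^ 2) with (v ^ 2 * r ^ 2 / (a * (m / (2 * a ^ 2 * k))) ^ 2)
  by (field; repeat split; lra).
rewrite Hv. subst l. field. repeat split; lra.
Qed.

Section Main.
Variables m l : R.
Hypothesis hm : 0 < m.
Hypothesis hl : 0 < l.

Definition Kf a := kappa m a l.
Definition Pf a := pp m a l.
Definition Tf th a := Sinv (kappa m a l) (th / pp m a l).

Lemma Kb a : 0 < a -> 0 < kappa m a l < 1.
Proof. intros; apply K_facts; auto. Qed.
Lemma Kl a : 0 < a -> l = m ^ 2 * (1 - kappa m a l ^ 2) / (4 * a ^ 2 * kappa m a l ^ 2).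
Proof. intros; apply K_facts; auto. Qed.

Lemma P_pos a : 0 < a -> 0 < pp m a l.
Proof.
intros ha. destruct (Kb a ha). unfold pp. apply Rdiv_lt_0_compat; auto.
assert (0 < a ^ 2) by (apply pow_lt; lra). nra.
Qed.

Lemma T_spec th a : 0 < a -> sig (kappa m a l) (Tf th a) = th / pp m a l.
Proof. intros ha. destruct (Kb a ha). apply Sinv_spec. lra. Qed.

Lemma Rf_eq th a : 0 < a -> Rf m l th a = pp m a l * (cosh (Tf th a) - kappa m a l).
Proof.
intros ha. pose proof (P_pos a ha). destruct (Kb a ha). unfold Rf.
replace (Rabs th / pp m a l) with (Rabs (sig (kappa m a l) (Tf th a))).
- rewrite H_spec by lra. ring.
- rewrite T_spec by auto. rewrite Rabs_div by lra. rewrite (Rabs_right (pp m a l)) by lra. auto.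
Qed.

Lemma T_sign th a : 0 < a -> (0 < th <-> 0 < Tf th a) /\ (th < 0 <-> Tf th a < 0).
Proof.
intros ha. pose proof (P_pos a ha). destruct (Kb a ha).
destruct (sig_sign (kappa m a l) (Tf th a)) as [A [B _]]; [lra|].
rewrite T_spec in A, B by auto.
assert (0 < th <-> 0 < th / pp m a l).
{ split; intro. apply Rdiv_lt_0_compat; auto.
  destruct (Rle_dec th 0); auto. assert (th / pp m a l <= 0); [|lra].
  unfold Rdiv. apply Rmult_le_0_r; auto. left; apply Rinv_0_lt_compat; auto. lra. }
assert (th < 0 <-> th / pp m a l < 0).
{ split; intro. unfold Rdiv. apply Rmult_neg_pos; auto. apply Rinv_0_lt_compat; auto.
  destruct (Rle_dec 0 th); auto. assert (0 <= th / pp m a l); [|lra].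
  unfold Rdiv. apply Rmult_le_pos; auto. left; apply Rinv_0_lt_compat; auto. lra. }
tauto.
Qed.

Lemma Vf_eq th a : 0 < a -> Vf m l th a = a * sinh (Tf th a) / (cosh (Tf th a) - kappa m a l).
Proof.
intros ha. pose proof (P_pos a ha). destruct (Kb a ha). pose proof (cosh_ge1 (Tf th a)).
unfold Vf. rewrite Rf_eq by auto. unfold pp.
rewrite (alg_V m l a (kappa m a l) (cosh (Tf th a)) (sinh (Tf th a))); auto; [| apply cosh_sinh2 | apply Kl; auto].
rewrite sqrt_sq_abs. rewrite Rabs_div, (Rabs_right (cosh _ - _)) by lra.
destruct (T_sign th a ha) as [[A1 A2] [B1 B2]].
destruct (Rtotal_order th 0) as [h|[h|h]].
- rewrite sgn_neg by auto. assert (sinh (Tf th a) < 0) by (apply sinh_neg; apply B1; lra).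
  rewrite Rabs_left by lra. field. lra.
- subst. rewrite sgn_0. assert (Tf 0 a = 0).
  { apply (sig_inj (kappa m a l)); [lra|]. rewrite T_spec by auto. unfold sig. rewrite sinh_0. unfold Rdiv. ring. }
  rewrite H3, sinh_0, Rabs_R0. unfold Rdiv; ring.
- rewrite sgn_pos by auto. assert (0 < sinh (Tf th a)) by (apply sinh_pos; apply A1; lra).
  rewrite Rabs_right by lra. field. lra.
Qed.


Lemma E_RV th a : 0 < a ->
  Vf m l th a ^ 2 - m / Rf m l th a + l / Rf m l th a ^ 2 = a ^ 2.
Proof.
intros ha. pose proof (P_pos a ha). destruct (Kb a ha). pose proof (cosh_ge1 (Tf th a)).
rewrite Vf_eq, Rf_eq by auto. unfold pp.
apply alg_E; auto. apply cosh_sinh2. apply Kl; auto.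
Qed.

Lemma Rf_pos th a : 0 < a -> 0 < Rf m l th a.
Proof.
intros ha. pose proof (P_pos a ha). destruct (Kb a ha). pose proof (cosh_ge1 (Tf th a)).
rewrite Rf_eq by auto. apply Rmult_lt_0_compat; lra.
Qed.

Lemma Dl_RV th a : 0 < a -> Dl m l (Rf m l th a) (Vf m l th a).
Proof.
intros ha. split. apply Rf_pos; auto. rewrite E_RV by auto. apply pow_lt; auto.
Qed.

Lemma Af_pos r v : Dl m l r v -> 0 < Af m l r v.
Proof. intros [hr hE]. unfold Af. apply sqrt_lt_R0. lra. Qed.

Lemma Af_sq r v : Dl m l r v -> Af m l r v ^ 2 = v ^ 2 - m / r + l / r ^ 2.
Proof. intros [hr hE]. unfold Af. rewrite <- Rsqr_pow2. apply Rsqr_sqrt. lra. Qed.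

Lemma Af_RV th a : 0 < a -> Af m l (Rf m l th a) (Vf m l th a) = a.
Proof.
intros ha. unfold Af. rewrite E_RV by auto. rewrite sqrt_pow2; lra.
Qed.

Definition wf r v := v * r / (Af m l r v * pp m (Af m l r v) l).

Lemma rPk r v : Dl m l r v ->
  r / pp m (Af m l r v) l + kappa m (Af m l r v) l = sqrt (wf r v ^ 2 + 1).
Proof.
intros HD. pose proof (Af_pos r v HD) as ha. set (a := Af m l r v) in *.
pose proof (P_pos a ha). destruct (Kb a ha). destruct HD as [hr hE].
rewrite <- (sqrt_pow2 (r / pp m a l + kappa m a l)).
- f_equal. unfold wf. fold a. unfold pp. apply (alg_w m l); auto. apply Af_sq; split; auto. apply Kl; auto.
- assert (0 < r / pp m a l) by (apply Rdiv_lt_0_compat; auto). lra.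
Qed.

Lemma Thf_eq r v : Dl m l r v ->
  Thf m l r v = pp m (Af m l r v) l * (wf r v - kappa m (Af m l r v) l * ash (wf r v)).
Proof.
intros HD. pose proof (rPk r v HD) as E. pose proof (Af_pos r v HD) as ha.
unfold Thf. cbv zeta. set (a := Af m l r v) in *. set (w := wf r v) in *.
pose proof (P_pos a ha). destruct (Kb a ha). destruct HD as [hr hE].
rewrite E, <- cosh_ash, G_cosh by lra.
assert (Sw : (0 < v -> 0 < w) /\ (v < 0 -> w < 0)).
{ unfold w, wf. fold a. assert (0 < a * pp m a l) by (apply Rmult_lt_0_compat; auto).
  split; intro. apply Rdiv_lt_0_compat; nra. unfold Rdiv. apply Rmult_neg_pos. nra. apply Rinv_0_lt_compat; auto. }
assert (Ssig : sig (kappa m a l) (ash w) = w - kappa m a l * ash w) by (unfold sig; rewrite sinh_ash; auto).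
destruct (sig_sign (kappa m a l) (ash w)) as [A [B C]]; [lra|].
destruct (Rtotal_order v 0) as [h|[h|h]].
- rewrite sgn_neg by auto. assert (w < 0) by (apply Sw; auto).
  assert (ash w < 0). { destruct (Rle_dec 0 (ash w)) as [hh|hh]; [|lra]. assert (Q : 0 <= sinh (ash w)).
    { destruct (Req_dec (ash w) 0) as [e|e]. rewrite e, sinh_0; lra. left; apply sinh_pos; lra. }
    rewrite sinh_ash in Q. lra. }
  rewrite Rabs_left by (apply B; auto). rewrite Ssig. ring.
- subst v. rewrite sgn_0. assert (w = 0) by (unfold w, wf; unfold Rdiv; ring).
  rewrite H2. unfold ash. replace (0 ^ 2 + 1) with 1 by ring. rewrite sqrt_1, Rplus_0_l, ln_1. ring.
- rewrite sgn_pos by auto. assert (0 < w) by (apply Sw; auto).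
  assert (0 < ash w). { destruct (Rle_dec (ash w) 0) as [hh|hh]; [|lra]. assert (Q : sinh (ash w) <= 0).
    { destruct (Req_dec (ash w) 0) as [e|e]. rewrite e, sinh_0; lra. left; apply sinh_neg; lra. }
    rewrite sinh_ash in Q. lra. }
  rewrite Rabs_right by (left; apply A; auto). rewrite Ssig. ring.
Qed.

Lemma left_inv th a : 0 < a ->
  Thf m l (Rf m l th a) (Vf m l th a) = th /\ Af m l (Rf m l th a) (Vf m l th a) = a.
Proof.
intros ha. split; [|apply Af_RV; auto].
rewrite Thf_eq by (apply Dl_RV; auto). rewrite Af_RV by auto.
pose proof (P_pos a ha). destruct (Kb a ha). pose proof (cosh_ge1 (Tf th a)).
assert (Hw : wf (Rf m l th a) (Vf m l th a) = sinh (Tf th a)).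
{ unfold wf. rewrite Af_RV by auto. rewrite Rf_eq, Vf_eq by auto. field. repeat split; lra. }
rewrite Hw, ash_sinh.
replace (sinh (Tf th a) - kappa m a l * Tf th a) with (sig (kappa m a l) (Tf th a)) by reflexivity.
rewrite T_spec by auto. field. lra.
Qed.

Lemma right_inv r v : Dl m l r v ->
  Rf m l (Thf m l r v) (Af m l r v) = r /\ Vf m l (Thf m l r v) (Af m l r v) = v.
Proof.
intros HD. pose proof (Af_pos r v HD) as ha. pose proof (rPk r v HD) as E.
pose proof (Thf_eq r v HD) as Eth.
set (a := Af m l r v) in *. set (w := wf r v) in *.
pose proof (P_pos a ha). destruct (Kb a ha). destruct HD as [hr hE].
assert (HT : Tf (Thf m l r v) a = ash w).
{ unfold Tf. rewrite Eth. replace (pp m a l * (w - kappa m a l * ash w) / pp m a l) with (sig (kappa m a l) (ash w)).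
  apply Sinv_sig; lra. unfold sig. rewrite sinh_ash. field. lra. }
rewrite Rf_eq, Vf_eq, HT, cosh_ash, sinh_ash by auto. rewrite <- E.
split.
- field. lra.
- unfold w, wf. fold a. field. repeat split; lra.
Qed.

End Main.

Section Ckl.
Variable U : R -> R -> Prop.
Hypothesis HU : open2 U.
Variable n : nat.
Lemma Ckc_opp f : Ckc n U f -> Ckc n U (fun x y => - f x y).
Proof. intros A. apply (Ckc_ext n U (fun x y => (-1) * f x y)); auto. intros; ring.
  apply Ckc_mult; auto. apply Ckc_const; auto. Qed.
Lemma Ckc_minus f g : Ckc n U f -> Ckc n U g -> Ckc n U (fun x y => f x y - g x y).
Proof. intros A B. apply Ckc_plus; auto. apply Ckc_opp; auto. Qed.
Lemma Ckc_inv f : Ckc n U f -> (forall x y, U x y -> 0 < f x y) -> Ckc n U (fun x y => / f x y).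
Proof. intros A P. apply (Ckc_comp1 n U posR); auto. apply Cs1_inv. Qed.
Lemma Ckc_exp f : Ckc n U f -> Ckc n U (fun x y => exp (f x y)).
Proof. intros A. apply (Ckc_comp1 n U (fun _ => True)); auto. apply Cs1_exp. Qed.
Lemma Ckc_cosh f : Ckc n U f -> Ckc n U (fun x y => cosh (f x y)).
Proof. intros A. unfold cosh. apply (Ckc_ext n U (fun x y => (exp (f x y) + exp (- f x y)) * / 2)); auto.
  apply Ckc_mult; [exact HU| |apply Ckc_const; exact HU]. apply Ckc_plus; [exact HU|apply Ckc_exp; auto|].
  apply Ckc_exp, Ckc_opp; auto. Qed.
Lemma Ckc_sinh f : Ckc n U f -> Ckc n U (fun x y => sinh (f x y)).
Proof. intros A. unfold sinh. apply (Ckc_ext n U (fun x y => (exp (f x y) - exp (- f x y)) * / 2)); auto.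
  apply Ckc_mult; [exact HU| |apply Ckc_const; exact HU]. apply Ckc_minus; [apply Ckc_exp; auto|].
  apply Ckc_exp, Ckc_opp; auto. Qed.
End Ckl.

Lemma Sm_kappa U m l A : open2 U -> 0 < m -> 0 < l -> Sm U A ->
  Sm U (fun x y => kappa m (A x y) l).
Proof.
intros HU hm hl HA. unfold kappa.
assert (P : forall x y, 0 < 1 + 4 * A x y ^ 2 * l / m ^ 2).
{ intros. assert (0 <= A x y ^ 2) by apply pow2_ge_0. assert (0 < m^2) by (apply pow_lt; lra).
  assert (0 <= 4 * A x y ^ 2 * l / m ^ 2) by (apply Rmult_le_pos; [nra|left; apply Rinv_0_lt_compat; lra]). lra. }
apply Sm_inv; auto.
- apply Sm_sqrt; auto. apply Sm_plus; auto. apply Sm_const; auto.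
  apply Sm_div; auto. apply Sm_mult; auto. apply Sm_mult; auto. apply Sm_const; auto. apply Sm_pow2; auto.
  apply Sm_const; auto. apply Sm_const; auto. intros; apply pow_lt; lra.
- intros. apply sqrt_lt_R0; auto.
Qed.

Lemma Sm_pp U m l A : open2 U -> 0 < m -> 0 < l -> Sm U A -> (forall x y, U x y -> 0 < A x y) ->
  Sm U (fun x y => pp m (A x y) l).
Proof.
intros HU hm hl HA Ap. unfold pp. apply Sm_div; auto. apply Sm_const; auto.
apply Sm_mult; auto. apply Sm_mult; auto. apply Sm_const; auto. apply Sm_pow2; auto.
apply Sm_kappa; auto.
intros x y H. destruct (K_facts m l (A x y) hm hl (Ap x y H)) as [[K0 _] _].
assert (0 < A x y ^ 2) by (apply pow_lt; auto). nra.
Qed.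

Lemma open2_Hplane : open2 Hplane.
Proof.
intros x y H. unfold Hplane in H. exists (mkposreal y H). intros u v _ Hv. simpl in Hv.
unfold Hplane. apply Rabs_def2 in Hv. lra.
Qed.

Section Main2.
Variables m l : R.
Hypothesis hm : 0 < m.
Hypothesis hl : 0 < l.

Lemma SmK : Sm Hplane (fun _ a => kappa m a l).
Proof. apply (Sm_kappa Hplane m l (fun _ a => a)); auto. apply open2_Hplane. apply Sm_snd, open2_Hplane. Qed.
Lemma SmP : Sm Hplane (fun _ a => pp m a l).
Proof. apply (Sm_pp Hplane m l (fun _ a => a)); auto. apply open2_Hplane. apply Sm_snd, open2_Hplane.
Qed.

Lemma Tf_cont th0 a0 : 0 < a0 -> continuous (fun z : R * R => Tf m l (fst z) (snd z)) (th0, a0).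
Proof.
intros ha0. set (T0 := Tf m l th0 a0). set (K0 := kappa m a0 l). set (P0 := pp m a0 l).
set (g := fun th a => (th / pp m a l - th0 / P0 + (kappa m a l - K0) * T0) ^ 2 / (1 - kappa m a l) ^ 2).
assert (Sg : Sm Hplane g).
{ pose proof open2_Hplane as HU. unfold g. apply Sm_div; auto.
  - apply Sm_pow2; auto. apply Sm_plus; auto. apply Sm_minus; auto. apply Sm_div; auto.
    apply Sm_fst; auto. apply SmP. intros; apply P_pos; auto. apply Sm_const; auto.
    apply Sm_mult; auto. apply Sm_minus; auto. apply SmK. apply Sm_const; auto. apply Sm_const; auto.
  - apply Sm_pow2; auto. apply Sm_minus; auto. apply Sm_const; auto. apply SmK.
  - intros x y H. destruct (Kb m l hm hl y H). apply pow_lt; lra. }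
assert (Cg : continuous (fun z : R * R => g (fst z) (snd z)) (th0, a0)) by (apply (Sg 0%nat); exact ha0).
assert (g0 : g th0 a0 = 0) by (unfold g; fold P0 K0; unfold Rdiv; ring).
unfold continuous. apply filterlim_locally. intros eps.
assert (He2 : 0 < eps * eps) by (pose proof (cond_pos eps); nra).
pose proof (proj1 (filterlim_locally _ _) Cg (mkposreal _ He2)) as L1.
assert (L2 : locally (th0, a0) (fun z : R * R => 0 < snd z)).
{ apply (proj1 (locally_2d_locally (fun x y => 0 < y) th0 a0)). apply open2_Hplane. exact ha0. }
generalize (filter_and _ _ L1 L2). apply filter_imp. intros [x a] [B Ha]. simpl in B, Ha |- *.
change (Rabs (g x a - g th0 a0) < eps * eps) in B. rewrite g0, Rminus_0_r in B.
change (Rabs (Tf m l x a - T0) < eps).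
destruct (Kb m l hm hl a Ha) as [Ka0 Ka1].
destruct (sig_mvt K0 (kappa m a l) T0 (Tf m l x a)) as [xi [_ E]].
assert (S1 : sig (kappa m a l) (Tf m l x a) = x / pp m a l) by (apply T_spec; auto).
assert (S0 : sig K0 T0 = th0 / P0) by (unfold K0, T0, P0; apply T_spec; auto).
rewrite S1, S0 in E.
pose proof (cosh_ge1 xi).
set (N := x / pp m a l - th0 / P0 + (kappa m a l - K0) * T0) in *.
assert (Hg : g x a = N ^ 2 / (1 - kappa m a l) ^ 2) by reflexivity.
assert (I1 : (Tf m l x a - T0) ^ 2 * (1 - kappa m a l) ^ 2 <= N ^ 2).
{ assert (N = (Tf m l x a - T0) * (cosh xi - kappa m a l)) by lra. rewrite H0.
  assert (0 < 1 - kappa m a l) by lra.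
  replace (((Tf m l x a - T0) * (cosh xi - kappa m a l)) ^ 2) with
    ((Tf m l x a - T0) ^ 2 * (cosh xi - kappa m a l) ^ 2) by ring.
  apply Rmult_le_compat_l. apply pow2_ge_0. apply pow_incr. lra. }
assert (I2 : (Tf m l x a - T0) ^ 2 <= g x a).
{ rewrite Hg. apply Rmult_le_reg_r with ((1 - kappa m a l) ^ 2). apply pow_lt; lra.
  unfold Rdiv. rewrite Rmult_assoc, Rinv_l, Rmult_1_r; auto. apply pow_nonzero; lra. }
rewrite Rabs_right in B by (rewrite Hg; apply Rle_ge; unfold Rdiv; apply Rmult_le_pos; [apply pow2_ge_0|left; apply Rinv_0_lt_compat, pow_lt; lra]).
pose proof (cond_pos eps). apply Rabs_def1; nra.
Qed.


Lemma is_derive_val (f : R -> R) x l1 l2 : is_derive f x l1 -> l1 = l2 -> is_derive f x l2.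
Proof. intros; subst; auto. Qed.

Lemma Tf_cont_th th0 a0 : 0 < a0 -> continuous (fun t => Tf m l t a0) th0.
Proof.
intros ha. apply (continuous_comp_2 (fun t : R => t) (fun _ : R => a0) (fun x y => Tf m l x y)).
apply continuous_id. apply continuous_const. apply Tf_cont; auto.
Qed.

Lemma Tf_cont_a th0 a0 : 0 < a0 -> continuous (fun a => Tf m l th0 a) a0.
Proof.
intros ha. apply (continuous_comp_2 (fun _ : R => th0) (fun a : R => a) (fun x y => Tf m l x y)).
apply continuous_const. apply continuous_id. apply Tf_cont; auto.
Qed.

Lemma Tf_dth th0 a0 : 0 < a0 ->
  is_derive (fun t => Tf m l t a0) th0 (/ pp m a0 l / (cosh (Tf m l th0 a0) - kappa m a0 l)).
Proof.
intros ha. pose proof (P_pos m l hm hl a0 ha). destruct (Kb m l hm hl a0 ha).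
apply (impl_deriv (fun t => Tf m l t a0) (fun _ => kappa m a0 l) (fun t => t / pp m a0 l)).
- apply Tf_cont_th; auto.
- apply continuous_const.
- auto_derive; auto. field. lra.
- lra.
- apply filter_forall. intros x.
  destruct (sig_mvt (kappa m a0 l) (kappa m a0 l) (Tf m l th0 a0) (Tf m l x a0)) as [xi [Hx1 Hx2]].
  exists xi. split; auto. rewrite Hx2, !T_spec by auto. ring.
Qed.

Lemma Tf_da th0 a0 : 0 < a0 ->
  is_derive (fun a => Tf m l th0 a) a0
   ((th0 * ((1 + kappa m a0 l ^ 2) / (a0 * pp m a0 l)) +
     (- kappa m a0 l * (1 - kappa m a0 l ^ 2) / a0) * Tf m l th0 a0)
    / (cosh (Tf m l th0 a0) - kappa m a0 l)).
Proof.
intros ha. pose proof (P_pos m l hm hl a0 ha). destruct (Kb m l hm hl a0 ha).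
set (T0 := Tf m l th0 a0).
apply (impl_deriv (fun a => Tf m l th0 a) (fun a => kappa m a l)
         (fun a => th0 * / pp m a l + kappa m a l * T0)).
- apply Tf_cont_a; auto.
- apply (ex_derive_continuous (fun a => kappa m a l)). eexists; apply K_deriv; auto.
- pose proof (is_derive_scal (fun a => / pp m a l) a0 th0 _ (invP_deriv m l a0 hm hl ha)) as D1.
  pose proof (is_derive_scal (fun a => kappa m a l) a0 T0 _ (K_deriv m l a0 hm hl ha)) as D2.
  pose proof (is_derive_plus _ _ _ _ _ D1 D2) as D3.
  apply (is_derive_ext (fun a => plus (th0 * / pp m a l) (T0 * kappa m a l))).
  { intro t. change (th0 * / pp m t l + T0 * kappa m t l = th0 * / pp m t l + kappa m t l * T0). ring. }
  apply (is_derive_val _ _ _ _ D3). change (th0 * ((1 + kappa m a0 l ^ 2) / (a0 * pp m a0 l)) +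
    T0 * (- kappa m a0 l * (1 - kappa m a0 l ^ 2) / a0) = th0 * ((1 + kappa m a0 l ^ 2) / (a0 * pp m a0 l)) +
     (- kappa m a0 l * (1 - kappa m a0 l ^ 2) / a0) * T0). ring.
- lra.
- generalize (open1_pos a0 ha). apply filter_imp. intros a Ha. unfold posR in Ha.
  destruct (sig_mvt (kappa m a0 l) (kappa m a l) T0 (Tf m l th0 a)) as [xi [Hx1 Hx2]].
  exists xi. split; auto. cbv beta. fold T0. rewrite Hx2. unfold T0. rewrite !T_spec by auto. unfold Rdiv. ring.
Qed.

Lemma Tf_Ckc n : Ckc n Hplane (fun th a => Tf m l th a).
Proof.
pose proof open2_Hplane as HU.
assert (Cp : forall x y, Hplane x y -> 0 < cosh (Tf m l x y) - kappa m y l).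
{ intros x y H. destruct (Kb m l hm hl y H). pose proof (cosh_ge1 (Tf m l x y)). lra. }
induction n as [|n IH].
- split; [|exact I]. intros x y H. apply Tf_cont; auto.
- split; [intros x y H; apply Tf_cont; auto|]. split; [|split].
  + intros x y H. split; eexists; [apply Tf_dth|apply Tf_da]; auto.
  + apply (Ckc_ext n Hplane (fun th a => / pp m a l * / (cosh (Tf m l th a) - kappa m a l))); auto.
    * intros x y H. unfold dx. cbv beta. symmetry. apply is_derive_unique. apply Tf_dth; auto.
    * apply Ckc_mult; auto. apply Sm_inv; auto. apply SmP. intros; apply P_pos; auto.
      apply Ckc_inv; auto. apply Ckc_minus; auto. apply Ckc_cosh; auto. apply SmK.
  + apply (Ckc_ext n Hplane (fun th a => (th * ((1 + kappa m a l ^ 2) / (a * pp m a l)) +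
     (- kappa m a l * (1 - kappa m a l ^ 2) / a) * Tf m l th a) * / (cosh (Tf m l th a) - kappa m a l))); auto.
    * intros x y H. unfold dy. cbv beta. symmetry. apply is_derive_unique. apply Tf_da; auto.
    * apply Ckc_mult; auto.
      -- apply Ckc_plus; auto.
         ++ apply Sm_mult; auto. apply Sm_fst; auto. apply Sm_div; auto.
            apply Sm_plus; auto. apply Sm_const; auto. apply Sm_pow2; auto. apply SmK.
            apply Sm_mult; auto. apply Sm_snd; auto. apply SmP.
            intros x y H. apply Rmult_lt_0_compat; auto. apply P_pos; auto.
         ++ apply Ckc_mult; auto. apply Sm_div; auto. apply Sm_mult; auto. apply Sm_opp; auto. apply SmK.
            apply Sm_minus; auto. apply Sm_const; auto. apply Sm_pow2; auto. apply SmK. apply Sm_snd; auto.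
      -- apply Ckc_inv; auto. apply Ckc_minus; auto. apply Ckc_cosh; auto. apply SmK.
Qed.

Lemma Tf_Sm : Sm Hplane (fun th a => Tf m l th a).
Proof. intro n; apply Tf_Ckc. Qed.

Lemma Rf_Sm : Sm Hplane (Rf m l).
Proof.
pose proof open2_Hplane as HU.
apply (Sm_ext Hplane HU (fun th a => pp m a l * (cosh (Tf m l th a) - kappa m a l))).
- intros x y H. symmetry. apply Rf_eq; auto.
- apply Sm_mult; auto. apply SmP. apply Sm_minus; auto. apply Sm_cosh; auto. apply Tf_Sm. apply SmK.
Qed.

Lemma Vf_Sm : Sm Hplane (Vf m l).
Proof.
pose proof open2_Hplane as HU.
apply (Sm_ext Hplane HU (fun th a => a * sinh (Tf m l th a) / (cosh (Tf m l th a) - kappa m a l))).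
- intros x y H. symmetry. apply Vf_eq; auto.
- apply Sm_div; auto. apply Sm_mult; auto. apply Sm_snd; auto. apply Sm_sinh; auto. apply Tf_Sm.
  apply Sm_minus; auto. apply Sm_cosh; auto. apply Tf_Sm. apply SmK.
  intros x y H. destruct (Kb m l hm hl y H). pose proof (cosh_ge1 (Tf m l x y)). lra.
Qed.

End Main2.

Section Main3.
Variables m l : R.
Hypothesis hm : 0 < m.
Hypothesis hl : 0 < l.

Definition Ef r v := v ^ 2 - m / r + l / r ^ 2.

Lemma SmE U : open2 U -> (forall r v, U r v -> 0 < r) -> Sm U (fun r v => Ef r v).
Proof.
intros HU Hr. unfold Ef. apply Sm_plus; auto. apply Sm_minus; auto. apply Sm_pow2; auto. apply Sm_snd; auto.
apply Sm_div; auto. apply Sm_const; auto. apply Sm_fst; auto.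
apply Sm_div; auto. apply Sm_const; auto. apply Sm_pow2; auto. apply Sm_fst; auto.
all: intros; try apply pow_lt; eauto.
Qed.

Lemma open2_rpos : open2 (fun r _ => 0 < r).
Proof.
intros x y H. exists (mkposreal x H). intros u v Hu _. simpl in Hu. apply Rabs_def2 in Hu. lra.
Qed.

Lemma open2_Dl : open2 (Dl m l).
Proof.
intros r v [hr hE].
assert (C : continuous (fun z : R * R => Ef (fst z) (snd z)) (r, v)).
{ apply (SmE _ open2_rpos (fun r v H => H) 0%nat). exact hr. }
apply (proj2 (locally_2d_locally (Dl m l) r v)).
assert (hE' : 0 < Ef r v) by (unfold Ef; lra).
pose proof (proj1 (filterlim_locally _ _) C (mkposreal _ hE')) as L1.
assert (L2 : locally (r, v) (fun z : R * R => 0 < fst z)).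
{ apply (proj1 (locally_2d_locally (fun x y => 0 < x) r v)). apply open2_rpos. exact hr. }
generalize (filter_and _ _ L1 L2). apply filter_imp. intros [x y] [B H]. simpl in B, H.
change (Rabs (Ef x y - Ef r v) < Ef r v) in B. apply Rabs_def2 in B.
split; auto. unfold Ef in B. change (y ^ 2 - m / x + l / x ^ 2 > 0). destruct B; lra.
Qed.

Lemma Dl_rpos r v : Dl m l r v -> 0 < r.
Proof. intros [h _]; auto. Qed.

Lemma SmA : Sm (Dl m l) (Af m l).
Proof.
pose proof open2_Dl as HU. unfold Af. apply Sm_sqrt; auto.
apply (SmE _ HU Dl_rpos). intros r v [_ h]; unfold Ef; lra.
Qed.

Lemma Thf_Sm : Sm (Dl m l) (Thf m l).
Proof.
pose proof open2_Dl as HU.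
assert (Ap : forall r v, Dl m l r v -> 0 < Af m l r v) by (intros; apply Af_pos; auto).
assert (SP : Sm (Dl m l) (fun r v => pp m (Af m l r v) l)) by (apply Sm_pp; auto; apply SmA).
assert (SK : Sm (Dl m l) (fun r v => kappa m (Af m l r v) l)) by (apply Sm_kappa; auto; apply SmA).
assert (Sw : Sm (Dl m l) (fun r v => wf m l r v)).
{ unfold wf. apply Sm_div; auto. apply Sm_mult; auto. apply Sm_snd; auto. apply Sm_fst; auto.
  apply Sm_mult; auto. apply SmA. intros r v H. apply Rmult_lt_0_compat; auto. apply P_pos; auto. }
apply (Sm_ext _ HU (fun r v => pp m (Af m l r v) l * (wf m l r v - kappa m (Af m l r v) l * ash (wf m l r v)))).
- intros r v H. symmetry. apply Thf_eq; auto.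
- apply Sm_mult; auto. apply Sm_minus; auto. apply Sm_mult; auto. unfold ash.
  apply Sm_ln; auto. apply Sm_plus; auto. apply Sm_sqrt; auto. apply Sm_plus; auto. apply Sm_pow2; auto.
  apply Sm_const; auto. intros; pose proof (pow2_ge_0 (wf m l x y)); lra.
  intros; apply ash_arg.
Qed.

End Main3.

Lemma Derive_eq_of (f : R -> R) x l : is_derive f x l -> Derive f x = l.
Proof. apply is_derive_unique. Qed.

Section Main4.
Variables m l : R.
Hypothesis hm : 0 < m.
Hypothesis hl : 0 < l.

Lemma pp_deriv a : 0 < a -> is_derive (fun s => pp m s l) a (- pp m a l * (1 + kappa m a l ^ 2) / a).
Proof.
intros ha. pose proof (P_pos m l hm hl a ha).
apply (is_derive_ext_loc (fun s => / (/ pp m s l))).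
{ assert (E : forall s : R, 0 < s -> / / pp m s l = pp m s l).
  { intros s Hs. pose proof (P_pos m l hm hl s Hs). field. lra. }
  generalize (open1_pos a ha). apply filter_imp. intros s Hs. apply E, Hs. }
pose proof (invP_deriv m l a hm hl ha) as D.
replace (- pp m a l * (1 + kappa m a l ^ 2) / a) with
  (- ((1 + kappa m a l ^ 2) / (a * pp m a l)) / (/ pp m a l) ^ 2) by (field; lra).
apply (is_derive_inv (fun s => / pp m s l)); auto. apply Rgt_not_eq, Rinv_0_lt_compat; auto.
Qed.

Lemma Rf_dth th a : 0 < a -> is_derive (fun t => Rf m l t a) th
  (pp m a l * (sinh (Tf m l th a) * (/ pp m a l / (cosh (Tf m l th a) - kappa m a l)))).
Proof.
intros ha.
apply (is_derive_ext (fun t => pp m a l * (cosh (Tf m l t a) - kappa m a l))).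
{ intros t. symmetry. apply Rf_eq; auto. }
pose proof (Tf_dth m l hm hl th a ha) as D.
auto_derive. eexists; exact D.
replace (Derive (fun x : R => Tf m l x a) th) with (/ pp m a l / (cosh (Tf m l th a) - kappa m a l))
  by (symmetry; apply is_derive_unique; exact D). ring.
Qed.


Definition TA th a := (th * ((1 + kappa m a l ^ 2) / (a * pp m a l)) +
     (- kappa m a l * (1 - kappa m a l ^ 2) / a) * Tf m l th a) / (cosh (Tf m l th a) - kappa m a l).
Definition TT th a := / pp m a l / (cosh (Tf m l th a) - kappa m a l).

Lemma Rf_da th a : 0 < a -> is_derive (fun s => Rf m l th s) a
  ((- pp m a l * (1 + kappa m a l ^ 2) / a) * (cosh (Tf m l th a) - kappa m a l) +
   pp m a l * (sinh (Tf m l th a) * TA th a - (- kappa m a l * (1 - kappa m a l ^ 2) / a))).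
Proof.
intros ha.
apply (is_derive_ext_loc (fun s => pp m s l * (cosh (Tf m l th s) - kappa m s l))).
{ assert (E : forall s : R, 0 < s -> pp m s l * (cosh (Tf m l th s) - kappa m s l) = Rf m l th s).
  { intros s Hs. symmetry. apply Rf_eq; auto. }
  generalize (open1_pos a ha). apply filter_imp. intros s Hs. apply E, Hs. }
pose proof (Tf_da m l hm hl th a ha) as D1. pose proof (K_deriv m l a hm hl ha) as D2.
pose proof (pp_deriv a ha) as D3.
auto_derive. repeat split; eexists; eauto.
replace (Derive (fun x : R => Tf m l th x) a) with (TA th a) by (symmetry; apply is_derive_unique; exact D1).
replace (Derive (fun x : R => kappa m x l) a) with (- kappa m a l * (1 - kappa m a l ^ 2) / a) by (symmetry; apply is_derive_unique; exact D2).
replace (Derive (fun x : R => pp m x l) a) with (- pp m a l * (1 + kappa m a l ^ 2) / a) by (symmetry; apply is_derive_unique; exact D3).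
ring.
Qed.

Lemma Vf_dth th a : 0 < a -> is_derive (fun t => Vf m l t a) th
  (a * ((cosh (Tf m l th a) * TT th a) * (cosh (Tf m l th a) - kappa m a l) - sinh (Tf m l th a) * (sinh (Tf m l th a) * TT th a))
    / (cosh (Tf m l th a) - kappa m a l) ^ 2).
Proof.
intros ha. destruct (Kb m l hm hl a ha). pose proof (cosh_ge1 (Tf m l th a)).
apply (is_derive_ext (fun t => a * sinh (Tf m l t a) / (cosh (Tf m l t a) - kappa m a l))).
{ intros t. symmetry. apply Vf_eq; auto. }
pose proof (Tf_dth m l hm hl th a ha) as D.
auto_derive. repeat split; try (eexists; exact D). lra.
replace (Derive (fun x : R => Tf m l x a) th) with (TT th a) by (symmetry; apply is_derive_unique; exact D).
field. lra.
Qed.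

Lemma Vf_da th a : 0 < a -> is_derive (fun s => Vf m l th s) a
  (sinh (Tf m l th a) / (cosh (Tf m l th a) - kappa m a l) +
   a * ((cosh (Tf m l th a) * TA th a) * (cosh (Tf m l th a) - kappa m a l)
        - sinh (Tf m l th a) * (sinh (Tf m l th a) * TA th a - (- kappa m a l * (1 - kappa m a l ^ 2) / a)))
    / (cosh (Tf m l th a) - kappa m a l) ^ 2).
Proof.
intros ha. destruct (Kb m l hm hl a ha). pose proof (cosh_ge1 (Tf m l th a)).
apply (is_derive_ext_loc (fun s => s * sinh (Tf m l th s) / (cosh (Tf m l th s) - kappa m s l))).
{ assert (E : forall s : R, 0 < s -> s * sinh (Tf m l th s) / (cosh (Tf m l th s) - kappa m s l) = Vf m l th s).
  { intros s Hs. symmetry. apply Vf_eq; auto. }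
  generalize (open1_pos a ha). apply filter_imp. intros s Hs. apply E, Hs. }
pose proof (Tf_da m l hm hl th a ha) as D1. pose proof (K_deriv m l a hm hl ha) as D2.
auto_derive. repeat split; try (eexists; eauto). lra.
replace (Derive (fun x : R => Tf m l th x) a) with (TA th a) by (symmetry; apply is_derive_unique; exact D1).
replace (Derive (fun x : R => kappa m x l) a) with (- kappa m a l * (1 - kappa m a l ^ 2) / a) by (symmetry; apply is_derive_unique; exact D2).
field. lra.
Qed.


Lemma jacobian th a : 0 < a ->
  Derive (fun t => Rf m l t a) th * Derive (fun s => Vf m l th s) a
  - Derive (fun s => Rf m l th s) a * Derive (fun t => Vf m l t a) th = 1.
Proof.
intros ha.
rewrite (Derive_eq_of (fun t => Rf m l t a) th _ (Rf_dth th a ha)),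
  (Derive_eq_of (fun s => Vf m l th s) a _ (Vf_da th a ha)),
  (Derive_eq_of (fun s => Rf m l th s) a _ (Rf_da th a ha)),
  (Derive_eq_of (fun t => Vf m l t a) th _ (Vf_dth th a ha)).
pose proof (P_pos m l hm hl a ha). destruct (Kb m l hm hl a ha). pose proof (cosh_ge1 (Tf m l th a)).
assert (Hth : th = pp m a l * (sinh (Tf m l th a) - kappa m a l * Tf m l th a)).
{ pose proof (T_spec m l hm hl th a ha) as S. unfold sig in S. rewrite S. field. lra. }
unfold TA, TT.
set (T := Tf m l th a) in *. set (K := kappa m a l) in *. set (P := pp m a l) in *.
clearbody T K P. rewrite Hth. clear Hth.
assert (Hd : cosh T - K <> 0) by lra.
unfold cosh, sinh in *. rewrite exp_Ropp in *. pose proof (exp_pos T).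
set (t := exp T) in *. clearbody t.
assert (E2 : t * t + 1 - K * (t * 2) = 2 * t * ((t + / t) / 2 - K)) by (field; lra).
field. rewrite E2. repeat split; try lra. apply Rmult_integral_contrapositive_currified; auto; lra.
Qed.

End Main4.

Lemma ash_deriv w : is_derive ash w (/ sqrt (w ^ 2 + 1)).
Proof.
unfold ash. pose proof (ash_arg w).
assert (Q : 0 < sqrt (w ^ 2 + 1)) by (apply sqrt_lt_R0; pose proof (pow2_ge_0 w); lra).
auto_derive; replace (w * (w * 1) + 1) with (w ^ 2 + 1) by ring.
- split; [pose proof (pow2_ge_0 w); lra|split; [lra|auto]].
- field. lra.
Qed.

Lemma Rbar_interval_ex lo hi : Rbar_lt lo hi -> exists t : R, Rbar_lt lo t /\ Rbar_lt t hi.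
Proof.
destruct lo as [a| |], hi as [b| |]; simpl; intro H; try contradiction.
- exists ((a + b) / 2). simpl. split; lra.
- exists (a + 1). simpl. split; [lra|auto].
- exists (b - 1). simpl. split; [auto|lra].
- exists 0. simpl. auto.
Qed.

Lemma in_between (lo hi : Rbar) (t0 t1 x : R) : Rbar_lt lo t0 -> Rbar_lt t0 hi -> Rbar_lt lo t1 -> Rbar_lt t1 hi ->
  Rmin t0 t1 <= x <= Rmax t0 t1 -> Rbar_lt lo x /\ Rbar_lt x hi.
Proof.
intros A B C D E. destruct (Rle_dec t0 t1).
- rewrite Rmin_left, Rmax_right in E by lra. split.
  + apply Rbar_lt_le_trans with t0; auto. change (t0 <= x); lra.
  + apply Rbar_le_lt_trans with t1; auto. change (x <= t1); lra.
- rewrite Rmin_right, Rmax_left in E by lra. split.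
  + apply Rbar_lt_le_trans with t1; auto. change (t1 <= x); lra.
  + apply Rbar_le_lt_trans with t0; auto. change (x <= t0); lra.
Qed.

Lemma const_interval (f : R -> R) (lo hi : Rbar) :
  (forall t : R, Rbar_lt lo t -> Rbar_lt t hi -> is_derive f t 0) ->
  forall t0 t1 : R, Rbar_lt lo t0 -> Rbar_lt t0 hi -> Rbar_lt lo t1 -> Rbar_lt t1 hi -> f t1 = f t0.
Proof.
intros D t0 t1 A B C E.
destruct (MVT_gen f t0 t1 (fun _ => 0)) as [c [_ M]].
- intros x Hx. destruct (in_between lo hi t0 t1 x A B C E) as [P Q]; [lra|]. apply D; auto.
- intros x Hx. destruct (in_between lo hi t0 t1 x A B C E) as [P Q]; [lra|].
  apply continuity_pt_filterlim. apply (ex_derive_continuous f). eexists; apply D; auto.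
- lra.
Qed.

Section ODE.
Variables m l : R.
Hypothesis hm : 0 < m.
Hypothesis hl : 0 < l.

Lemma E_const (r v : R -> R) t : r t <> 0 -> is_derive r t (v t) -> is_derive v t (l / (r t) ^ 3 - m / 2 * / (r t) ^ 2) ->
  is_derive (fun s => v s ^ 2 - m / r s + l / r s ^ 2) t 0.
Proof.
intros H0 Dr Dv. auto_derive.
- assert (r t * (r t * 1) <> 0) by (rewrite Rmult_1_r; apply Rmult_integral_contrapositive_currified; auto).
  repeat split; auto; eexists; eauto.
- rewrite (Derive_eq_of (fun x => v x) t _ Dv), (Derive_eq_of (fun x => r x) t _ Dr). field. auto.
Qed.

Lemma F_deriv (w : R -> R) t dw P0 K0 a0 : is_derive w t dw ->
  is_derive (fun s => P0 * (w s - K0 * ash (w s)) - s * a0) t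
    (P0 * (dw - K0 * (/ sqrt (w t ^ 2 + 1) * dw)) - a0).
Proof.
intros Dw. pose proof (ash_deriv (w t)) as Da.
auto_derive.
- repeat split; eexists; eauto.
- replace (Derive (fun x : R => w x) t) with dw by (symmetry; apply (Derive_eq_of (fun x => w x)); auto).
  replace (Derive (fun x : R => ash x) (w t)) with (/ sqrt (w t ^ 2 + 1)) by (symmetry; apply (Derive_eq_of (fun x => ash x)); auto).
  ring.
Qed.

Lemma ode_unique (lo hi : Rbar) (r v : R -> R) :
  Rbar_lt lo hi ->
  (forall t : R, Rbar_lt lo t -> Rbar_lt t hi ->
     Dl m l (r t) (v t) /\ is_derive r t (v t) /\
     is_derive v t (l / (r t) ^ 3 - m / 2 * / (r t) ^ 2)) ->
  exists th a, 0 < a /\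
    forall t : R, Rbar_lt lo t -> Rbar_lt t hi ->
      r t = Rf m l (th + t * a) a /\ v t = Vf m l (th + t * a) a.
Proof.
intros Hlh H.
destruct (Rbar_interval_ex lo hi Hlh) as [t0 [A0 B0]].
set (E := fun s => v s ^ 2 - m / r s + l / r s ^ 2).
assert (EC : forall t : R, Rbar_lt lo t -> Rbar_lt t hi -> E t = E t0).
{ intros t1 A1 B1. apply (const_interval E lo hi); [|exact A0|exact B0|exact A1|exact B1]. intros t A B. destruct (H t A B) as [[hr _] [Dr Dv]].
  apply E_const; auto. apply Rgt_not_eq; auto. }
set (a0 := Af m l (r t0) (v t0)).
destruct (H t0 A0 B0) as [HD0 _].
assert (ha0 : 0 < a0) by (apply Af_pos; auto).
assert (AC : forall t : R, Rbar_lt lo t -> Rbar_lt t hi -> Af m l (r t) (v t) = a0).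
{ intros t A B. unfold a0, Af. f_equal. apply (EC t A B). }
set (P0 := pp m a0 l). set (K0 := kappa m a0 l).
pose proof (P_pos m l hm hl a0 ha0) as HP0. destruct (Kb m l hm hl a0 ha0) as [K0p K0l].
set (w := fun s => v s * r s / (a0 * P0)).
set (F := fun s => P0 * (w s - K0 * ash (w s)) - s * a0).
assert (ThF : forall t : R, Rbar_lt lo t -> Rbar_lt t hi -> Thf m l (r t) (v t) = F t + t * a0).
{ intros t A B. destruct (H t A B) as [HD _]. rewrite (Thf_eq m l hm hl _ _ HD).
  unfold wf. rewrite (AC t A B). unfold F, w. fold P0 K0. ring. }
assert (FC : forall t : R, Rbar_lt lo t -> Rbar_lt t hi -> F t = F t0).
{ intros t1 A1 B1. apply (const_interval F lo hi); [|exact A0|exact B0|exact A1|exact B1]. intros t A B. destruct (H t A B) as [HD [Dr Dv]].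
  pose proof (rPk m l hm hl _ _ HD) as Hs. unfold wf in Hs. rewrite (AC t A B) in Hs. fold P0 K0 in Hs.
  pose proof (Af_sq m l _ _ HD) as Hsq. rewrite (AC t A B) in Hsq.
  destruct HD as [hr _].
  assert (Dw : is_derive w t (((l / r t ^ 3 - m / 2 * / r t ^ 2) * r t + v t * v t) / (a0 * P0))).
  { unfold w. auto_derive. repeat split; eexists; eauto.
    rewrite (Derive_eq_of (fun x => v x) t _ Dv), (Derive_eq_of (fun x => r x) t _ Dr). field.
    unfold P0; repeat split; apply Rgt_not_eq; auto. }
  apply (is_derive_val _ _ _ _ (F_deriv w t _ P0 K0 a0 Dw)).
  change (w t) with (v t * r t / (a0 * P0)). rewrite <- Hs.
  assert (HvE : v t * v t = a0 ^ 2 + m / r t - l / r t ^ 2) by lra.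
  rewrite HvE. unfold P0, K0 in *. unfold pp.
  pose proof (Kl m l hm hl a0 ha0) as HL.
  set (k := kappa m a0 l) in *. clearbody k.
  assert (Pp : 0 < m / (2 * a0 ^ 2 * k)) by (apply Rdiv_lt_0_compat; auto; assert (0 < a0 ^ 2) by (apply pow_lt; auto); nra).
  assert (0 < r t / (m / (2 * a0 ^ 2 * k)) + k) by (apply Rplus_lt_0_compat; auto; apply Rdiv_lt_0_compat; auto).
  rewrite HL. match goal with |- ?x = ?y => change (@eq R x y) end. field. assert (0 < a0 ^ 2) by (apply pow_lt; auto).
  repeat split; apply Rgt_not_eq; auto. apply Rplus_lt_0_compat; apply Rmult_lt_0_compat; auto. apply Rmult_lt_0_compat; lra. }
exists (F t0), a0. split; auto.
intros t A B. destruct (H t A B) as [HD _].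
destruct (right_inv m l hm hl _ _ HD) as [R1 R2].
rewrite ThF, AC, FC in R1, R2 by auto. split; auto.
Qed.

End ODE.

Section Fwd.
Variables m l : R.
Hypothesis hm : 0 < m.
Hypothesis hl : 0 < l.

Lemma curve th a t : 0 < a ->
  Dl m l (Rf m l (th + t * a) a) (Vf m l (th + t * a) a) /\
  is_derive (fun s => Rf m l (th + s * a) a) t (Vf m l (th + t * a) a) /\
  is_derive (fun s => Vf m l (th + s * a) a) t
    (l / (Rf m l (th + t * a) a) ^ 3 - m / 2 * / (Rf m l (th + t * a) a) ^ 2).
Proof.
intros ha. set (u := th + t * a).
assert (Dl_ : is_derive (fun s => th + s * a) t a) by (auto_derive; auto; ring).
pose proof (P_pos m l hm hl a ha). destruct (Kb m l hm hl a ha). pose proof (cosh_ge1 (Tf m l u a)).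
split; [apply Dl_RV; auto|split].
- apply (is_derive_val _ _ _ _ (is_derive_comp (fun x => Rf m l x a) (fun s => th + s * a) t _ _
         (Rf_dth m l hm hl u a ha) Dl_)).
  change (a * (pp m a l * (sinh (Tf m l u a) * (/ pp m a l / (cosh (Tf m l u a) - kappa m a l)))) = Vf m l u a).
  rewrite Vf_eq by auto. field. lra.
- apply (is_derive_val _ _ _ _ (is_derive_comp (fun x => Vf m l x a) (fun s => th + s * a) t _ _
         (Vf_dth m l hm hl u a ha) Dl_)).
  unfold scal; simpl; unfold mult; simpl.
  rewrite Rf_eq by auto. unfold TT.
  pose proof (Kl m l hm hl a ha) as HL. unfold pp.
  set (T := Tf m l u a) in *. set (K := kappa m a l) in *. clearbody T K.
  assert (Hd : cosh T - K <> 0) by lra.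
  rewrite HL.
  unfold cosh, sinh in *. rewrite exp_Ropp in *. pose proof (exp_pos T).
  set (t' := exp T) in *. clearbody t'.
  assert (E2 : t' * t' + 1 - K * (t' * 2) = 2 * t' * ((t' + / t') / 2 - K)) by (field; lra).
  assert (0 < a ^ 2) by (apply pow_lt; auto).
  field. rewrite E2. repeat split; try lra. apply Rmult_integral_contrapositive_currified; auto; lra.
Qed.
End Fwd.

Theorem proposition2p6 (m : R) (hm : 0 < m) (l : R) (hl : 0 < l) :
  (* (R,V) maps R x (0,oo) into D_l *)
  (forall th a, 0 < a -> Dl m l (Rf m l th a) (Vf m l th a)) /\
  (* (Theta, A) maps D_l into R x (0,oo) *)
  (forall r v, Dl m l r v -> 0 < Af m l r v) /\
  (* (Theta, A) is a left inverse of (R,V) *)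
  (forall th a, 0 < a ->
     Thf m l (Rf m l th a) (Vf m l th a) = th /\
     Af m l (Rf m l th a) (Vf m l th a) = a) /\
  (* (Theta, A) is a right inverse of (R,V) *)
  (forall r v, Dl m l r v ->
     Rf m l (Thf m l r v) (Af m l r v) = r /\
     Vf m l (Thf m l r v) (Af m l r v) = v) /\
  (* both maps are C^infinity *)
  smooth Hplane (Rf m l) /\ smooth Hplane (Vf m l) /\
  smooth (Dl m l) (Thf m l) /\ smooth (Dl m l) (Af m l) /\
  (* canonical: dr /\ dv = dtheta /\ da, i.e. the Jacobian determinant is 1 *)
  (forall th a, 0 < a ->
     Derive (fun t => Rf m l t a) th * Derive (fun s => Vf m l th s) a
     - Derive (fun s => Rf m l th s) a * Derive (fun t => Vf m l t a) th = 1) /\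
  (* every solution of the ODE on an open interval staying in D_l is such a curve *)
  (forall (lo hi : Rbar) (r v : R -> R),
     Rbar_lt lo hi ->
     (forall t : R, Rbar_lt lo t -> Rbar_lt t hi ->
        Dl m l (r t) (v t) /\
        is_derive r t (v t) /\
        is_derive v t (l / (r t) ^ 3 - m / 2 * / (r t) ^ 2)) ->
     exists th a, 0 < a /\
       forall t : R, Rbar_lt lo t -> Rbar_lt t hi ->
         r t = Rf m l (th + t * a) a /\ v t = Vf m l (th + t * a) a) /\
  (* and every such curve is a (global) solution staying in D_l *)
  (forall th a, 0 < a ->
     forall t,
       Dl m l (Rf m l (th + t * a) a) (Vf m l (th + t * a) a) /\
       is_derive (fun s => Rf m l (th + s * a) a) t (Vf m l (th + t * a) a) /\
       is_derive (fun s => Vf m l (th + s * a) a) t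
         (l / (Rf m l (th + t * a) a) ^ 3 - m / 2 * / (Rf m l (th + t * a) a) ^ 2)).
Proof.
split; [intros; apply Dl_RV; auto|].
split; [intros; apply Af_pos; auto|].
split; [intros; apply left_inv; auto|].
split; [intros; apply right_inv; auto|].
split; [intro n; apply Ckc_Ck, Rf_Sm; auto|].
split; [intro n; apply Ckc_Ck, Vf_Sm; auto|].
split; [intro n; apply Ckc_Ck, Thf_Sm; auto|].
split; [intro n; apply Ckc_Ck, SmA; auto|].
split; [intros; apply jacobian; auto|].
split; [intros; apply ode_unique; auto|].
intros; apply curve; auto.
Qed.
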